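(* Under the setting below, assume $G$ is convex, the sampling in Algorithm BC is essentially cyclic (there is $T\ge1$ such that every $i\in[N]$ belongs to at least one of $I^{k+1},\dots,I^{k+T}$ for every $k\ge0$), $\Phi$ is coercive, and $\Phi$ has the KL property with exponent $\theta\in(0,1)$ (e.g. when all $f_i$ and $G$ are semialgebraic). Then the sequences $(\bm x^k)$ and $(\bm z^k)$ converge to the same point $\bm x^\star$, which satisfies $0\in\hat\partial\Phi(\bm x^\star)$. If moreover $\theta\le\frac12$, then $(\|\bm z^k-\bm x^k\|)$, $(\bm x^k)$ and $(\bm z^k)$ converge R-linearly.
   Context: Setting: $N\ge1$, $n=\sum_{i=1}^N n_i$, $\bm x=(x_1,\dots,x_N)$ with $x_i\in\mathbb R^{n_i}$; $\Phi=F+G$ with $F(\bm x)=\frac1N\sum_i f_i(x_i)$, each $f_i:\mathbb R^{n_i}\to\mathbb R$ differentiable with $L_{f_i}$-Lipschitz gradient, $G:\mathbb R^n\to\mathbb R\cup\{+\infty\}$ proper lsc, $\arg\min\Phi\ne\emptyset$. $\gamma_i\in(0,N/L_{f_i})$, $\Gamma=\operatorname{blockdiag}(\gamma_1I_{n_1},\dots,\gamma_NI_{n_N})$, $\|x\|_V^2=\langle x,Vx\rangle$, $\operatorname{prox}_G^{V}(u)=\arg\min_w\{G(w)+\frac12\|w-u\|_V^2\}$, $\mathbf T(\bm x)=\operatorname{prox}_G^{\Gamma^{-1}}(\bm x-\Gamma\nabla F(\bm x))$. Algorithm BC: given $\bm x^0\in\mathbb R^n$, for $k=0,1,\dots$: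 pick $\bm z^k\in\mathbf T(\bm x^k)$; select $I^{k+1}\subseteq[N]$; set $x_i^{k+1}=z_i^k$ for $i\in I^{k+1}$ and $x_i^{k+1}=x_i^k$ otherwise. KL property: a proper lsc $h$ has the KL property with exponent $\theta\in(0,1)$ at $\bar w\in\operatorname{dom}h$ if there are $\varepsilon,\eta,\varrho>0$ such that $\psi'(h(w)-h(\bar w))\operatorname{dist}(0,\partial h(w))\ge1$ for all $w$ with $\|w-\bar w\|<\varepsilon$ and $h(\bar w)<h(w)<h(\bar w)+\eta$, where $\psi(s)=\varrho s^{1-\theta}$ and $\partial$ is the limiting subdifferential; $h$ has the KL property with exponent $\theta$ if this holds at every $\bar w\in\operatorname{dom}\partial h$. $\hat\partial$ is the regular subdifferential. *)

(* Defs.v *)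
From Stdlib Require Import Reals.
From mathcomp Require Import ssreflect ssrfun ssrbool eqtype ssrnat seq fintype bigop.
Open Scope R_scope.

Definition sumR {n : nat} (f : 'I_n -> R) : R := \big[Rplus/0]_(i < n) f i.

Definition blk (d : nat) : Type := ordinal d -> R.
Definition dot1 {d : nat} (u v : blk d) : R := sumR (fun j => u j * v j).
Definition norm1 {d : nat} (u : blk d) : R := sqrt (dot1 u u).
Definition add1 {d : nat} (u v : blk d) : blk d := fun j => u j + v j.
Definition sub1 {d : nat} (u v : blk d) : blk d := fun j => u j - v j.

(** Block vectors x = (x_1,...,x_N), x_i in R^{nb i};  R^n with n = sum nb i. *)
Definition bvec (N : nat) (nb : 'I_N -> nat) := forall i : 'I_N, blk (nb i).

Section BV.
Context {N : nat} {nb : 'I_N -> nat}.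
Definition bzero : bvec N nb := fun i j => 0.
Definition badd (x y : bvec N nb) : bvec N nb := fun i j => x i j + y i j.
Definition bsub (x y : bvec N nb) : bvec N nb := fun i j => x i j - y i j.
Definition bscal (a : R) (x : bvec N nb) : bvec N nb := fun i j => a * x i j.
Definition bdot (x y : bvec N nb) : R := sumR (fun i => dot1 (x i) (y i)).
Definition bnorm (x : bvec N nb) : R := sqrt (bdot x x).
(** ||x||_V^2 for V = blockdiag(w_1 I, ..., w_N I). *)
Definition wnorm2 (w : 'I_N -> R) (x : bvec N nb) : R :=
  sumR (fun i => w i * dot1 (x i) (x i)).

Definition bconv (u : nat -> bvec N nb) (l : bvec N nb) : Prop :=
  forall eps, 0 < eps -> exists K, forall k, (K <= k)%nat -> bnorm (bsub (u k) l) < eps.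

(** An extended-real-valued function h : R^n -> R ∪ {+oo} is encoded by a pair
    (dom, h): h x is its (finite) value when dom x holds, and h = +oo outside dom. *)
Definition proper_ext (dom : bvec N nb -> Prop) : Prop := exists x, dom x.

Definition lsc_ext (dom : bvec N nb -> Prop) (h : bvec N nb -> R) : Prop :=
  forall x,
    (dom x -> forall eps, 0 < eps -> exists delta, 0 < delta /\
        forall y, dom y -> bnorm (bsub y x) < delta -> h x - eps < h y) /\
    (~ dom x -> forall M, exists delta, 0 < delta /\
        forall y, dom y -> bnorm (bsub y x) < delta -> M < h y).

Definition convex_ext (dom : bvec N nb -> Prop) (h : bvec N nb -> R) : Prop :=
  forall x y lam, dom x -> dom y -> 0 <= lam <= 1 ->
    dom (badd (bscal lam x) (bscal (1 - lam) y)) /\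
    h (badd (bscal lam x) (bscal (1 - lam) y)) <= lam * h x + (1 - lam) * h y.

Definition coercive_ext (dom : bvec N nb -> Prop) (h : bvec N nb -> R) : Prop :=
  forall M, exists r, forall x, dom x -> r <= bnorm x -> M <= h x.

Definition argmin_nonempty (dom : bvec N nb -> Prop) (h : bvec N nb -> R) : Prop :=
  exists x, dom x /\ forall y, dom y -> h x <= h y.

Definition regular_subdiff (dom : bvec N nb -> Prop) (h : bvec N nb -> R)
    (x v : bvec N nb) : Prop :=
  dom x /\ forall eps, 0 < eps -> exists delta, 0 < delta /\
    forall y, dom y -> bnorm (bsub y x) < delta ->
      - eps * bnorm (bsub y x) <= h y - h x - bdot v (bsub y x).

Definition limiting_subdiff (dom : bvec N nb -> Prop) (h : bvec N nb -> R)
    (x v : bvec N nb) : Prop :=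
  dom x /\ exists (xs vs : nat -> bvec N nb),
    bconv xs x /\ Un_cv (fun k => h (xs k)) (h x) /\
    (forall k, regular_subdiff dom h (xs k) (vs k)) /\ bconv vs v.

(** KL property with exponent theta at wb, with psi(s) = rho s^(1-theta),
    psi'(s) = rho (1-theta) s^(-theta).  The inequality
    psi'(h w - h wb) * dist(0, ∂h(w)) >= 1 is written out as: for every
    v ∈ ∂h(w), psi'(h w - h wb) * ||v|| >= 1 (dist = inf, = +oo if empty). *)
Definition KL_at (dom : bvec N nb -> Prop) (h : bvec N nb -> R) (theta : R)
    (wb : bvec N nb) : Prop :=
  dom wb /\ exists eps eta rho, 0 < eps /\ 0 < eta /\ 0 < rho /\
    forall w, bnorm (bsub w wb) < eps -> dom w ->
      h wb < h w -> h w < h wb + eta ->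
      forall v, limiting_subdiff dom h w v ->
        1 <= rho * (1 - theta) * Rpower (h w - h wb) (- theta) * bnorm v.

Definition KL_exp (dom : bvec N nb -> Prop) (h : bvec N nb -> R) (theta : R) : Prop :=
  forall wb, (exists v, limiting_subdiff dom h wb v) -> KL_at dom h theta wb.

Definition in_prox (dom : bvec N nb -> Prop) (G : bvec N nb -> R)
    (w : 'I_N -> R) (u z : bvec N nb) : Prop :=
  dom z /\ forall y, dom y ->
    G z + / 2 * wnorm2 w (bsub z u) <= G y + / 2 * wnorm2 w (bsub y u).

Definition Rlinear_R (a : nat -> R) (l : R) : Prop :=
  exists c rho, 0 < rho < 1 /\ forall k, Rabs (a k - l) <= c * rho ^ k.
Definition Rlinear_b (u : nat -> bvec N nb) (l : bvec N nb) : Prop :=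
  exists c rho, 0 < rho < 1 /\ forall k, bnorm (bsub (u k) l) <= c * rho ^ k.
End BV.

Definition is_gradient {d : nat} (f : blk d -> R) (g : blk d -> blk d) : Prop :=
  forall x eps, 0 < eps -> exists delta, 0 < delta /\
    forall hh, norm1 hh < delta ->
      Rabs (f (add1 x hh) - f x - dot1 (g x) hh) <= eps * norm1 hh.

Definition lipschitz_grad {d : nat} (g : blk d -> blk d) (L : R) : Prop :=
  forall x y, norm1 (sub1 (g x) (g y)) <= L * norm1 (sub1 x y).

Definition Fsum {N : nat} {nb : 'I_N -> nat} (f : forall i : 'I_N, blk (nb i) -> R)
    (x : bvec N nb) : R := / INR N * sumR (fun i => f i (x i)).
Definition gradF {N : nat} {nb : 'I_N -> nat}
    (gf : forall i : 'I_N, blk (nb i) -> blk (nb i)) (x : bvec N nb) : bvec N nb :=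
  fun i j => / INR N * gf i (x i) j.

(** T(x) = prox_G^{Gamma^-1}(x - Gamma ∇F(x)) (set-valued). *)
Definition in_T {N : nat} {nb : 'I_N -> nat} (dom : bvec N nb -> Prop)
    (G : bvec N nb -> R) (gf : forall i : 'I_N, blk (nb i) -> blk (nb i))
    (gamma : 'I_N -> R) (x z : bvec N nb) : Prop :=
  in_prox dom G (fun i => / gamma i)
    (fun i j => x i j - gamma i * gradF gf x i j) z.

(* Main.v *)
Require Import Defs.
From Stdlib Require Import Reals Lra Lia FunctionalExtensionality ClassicalEpsilon.
From mathcomp Require Import ssreflect ssrfun ssrbool eqtype ssrnat seq fintype bigop.
From mathcomp Require Import zify.
Open Scope R_scope.

From HB Require Import structures.
HB.instance Definition _ := Monoid.isComLaw.Build R 0 Rplus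
  (fun x y z => esym (Rplus_assoc x y z)) Rplus_comm Rplus_0_l.

Lemma sumR_ext {n} (f g : 'I_n -> R) : (forall i, f i = g i) -> sumR f = sumR g.
Proof. move=> H; rewrite /sumR; apply: eq_bigr => i _; exact: H. Qed.

Lemma sumR_add {n} (f g : 'I_n -> R) : sumR (fun i => f i + g i) = sumR f + sumR g.
Proof.
rewrite /sumR. apply: (big_ind3 (fun a b c => a = b + c)) => //; first lra.
move=> *; subst; lra.
Qed.

Lemma sumR_scal {n} (c : R) (f : 'I_n -> R) : sumR (fun i => c * f i) = c * sumR f.
Proof.
rewrite /sumR. apply: (big_ind2 (fun a b => a = c * b)) => //; first lra.
move=> *; subst; lra.
Qed.

Lemma sumR_le {n} (f g : 'I_n -> R) : (forall i, f i <= g i) -> sumR f <= sumR g.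
Proof.
move=> H; rewrite /sumR. apply: (big_ind2 (fun a b => a <= b)) => //; first lra.
move=> *; lra.
Qed.

Lemma sumR_0 n : sumR (fun _ : 'I_n => 0) = 0.
Proof. rewrite /sumR. apply: (big_ind (fun a => a = 0)) => //. move=> *; subst; lra. Qed.

Lemma sumR_nonneg {n} (f : 'I_n -> R) : (forall i, 0 <= f i) -> 0 <= sumR f.
Proof. move=> H; rewrite -(sumR_0 n); exact: sumR_le. Qed.

Lemma sumR_sub {n} (f g : 'I_n -> R) : sumR (fun i => f i - g i) = sumR f - sumR g.
Proof.
have := sumR_add (fun i => f i - g i) g.
have -> : sumR (fun i => f i - g i + g i) = sumR f by apply: sumR_ext => i; lra.
lra.
Qed.

Lemma sumR_single {n} (f : 'I_n -> R) (i : 'I_n) : (forall j, 0 <= f j) -> f i <= sumR f.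
Proof.
move=> H; rewrite /sumR (bigD1_seq i) ?mem_index_enum ?index_enum_uniq //=.
rewrite -{1}(Rplus_0_r (f i)); apply Rplus_le_compat_l.
apply: (big_ind (fun a => 0 <= a)) => //; first lra. move=> *; lra.
Qed.

Lemma sumR_lt_all {n} (f : 'I_n -> R) (e : R) : (forall i, f i <= e) -> sumR f <= INR n * e.
Proof.
move=> H. apply: Rle_trans (sumR_le f (fun _ => e) H) _.
rewrite /sumR big_const_ord. clear f H. elim: n => [|n IH]; first by simpl; lra.
rewrite S_INR /=. lra.
Qed.

Lemma sumR_sq_le {n} (a : 'I_n -> R) : (forall i, 0 <= a i) -> sumR (fun i => a i * a i) <= sumR a * sumR a.
Proof.
move=> H. rewrite -sumR_scal. apply: sumR_le => i.
have := sumR_single a i H. have := H i. nra.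
Qed.

Lemma sumR_abs {n} (f : 'I_n -> R) : Rabs (sumR f) <= sumR (fun i => Rabs (f i)).
Proof.
rewrite /sumR. apply: (big_ind2 (fun a b => Rabs a <= b)) => //.
- rewrite Rabs_R0; lra.
- move=> x1 x2 y1 y2 H1 H2. apply: Rle_trans (Rabs_triang _ _) _. lra.
- move=> *; lra.
Qed.

Lemma sumR_bound_exists {n} (c : 'I_n -> R) : exists M, 0 < M /\ forall i, c i <= M.
Proof.
exists (1 + sumR (fun i => Rabs (c i))). split.
- have := sumR_nonneg (fun i => Rabs (c i)) (fun i => Rabs_pos _). lra.
- move=> i. have := sumR_single (fun i => Rabs (c i)) i (fun i => Rabs_pos _).
  have := Rle_abs (c i). lra.
Qed.

Lemma sumR_lbound_exists {n} (c : 'I_n -> R) : (forall i, 0 < c i) -> exists m, 0 < m /\ forall i, m <= c i.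
Proof.
move=> H. have [M [HM HcM]] := sumR_bound_exists (fun i => / c i).
exists (/ M). split; first by apply Rinv_0_lt_compat.
move=> i. have := HcM i. have := H i => Hc Hi.
rewrite -(Rinv_inv (c i)). apply Rinv_le_contravar => //. by apply Rinv_0_lt_compat.
Qed.

Lemma finite_delta {n} (P : 'I_n -> R -> Prop) :
  (forall i d d', 0 < d' <= d -> P i d -> P i d') ->
  (forall i, exists d, 0 < d /\ P i d) -> exists d, 0 < d /\ forall i, P i d.
Proof.
move=> Hmon H.
have [dd Hdd] : exists dd : 'I_n -> R, forall i, 0 < dd i /\ P i (dd i).
  exists (fun i => proj1_sig (constructive_indefinite_description _ (H i))).
  move=> i; exact: proj2_sig (constructive_indefinite_description _ (H i)).
have [m [Hm Hmi]] := sumR_lbound_exists dd (fun i => proj1 (Hdd i)).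
exists m; split => // i. apply: (Hmon i (dd i)); first by split => //; exact: Hmi.
exact: proj2 (Hdd i).
Qed.

Lemma finite_eventually {n} (P : 'I_n -> nat -> Prop) :
  (forall i K K', (K <= K')%nat -> P i K -> P i K') ->
  (forall i, exists K, P i K) -> exists K, forall i, P i K.
Proof.
move=> Hmon H.
have [KK HK] : exists KK : 'I_n -> nat, forall i, P i (KK i).
  exists (fun i => proj1_sig (constructive_indefinite_description _ (H i))).
  move=> i; exact: proj2_sig (constructive_indefinite_description _ (H i)).
exists (\max_(i < n) KK i)%nat => i. apply: (Hmon i (KK i)) => //.
exact: (leq_bigmax i).
Qed.

Lemma Rabs_le_bt x y : Rabs x <= y -> - y <= x <= y.
Proof. move=> H. have := Rle_abs x. have := Rle_abs (- x). rewrite Rabs_Ropp. lra. Qed.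

Record IPS := mkIPS {
  ipT : Type;
  ipadd : ipT -> ipT -> ipT;
  ipscal : R -> ipT -> ipT;
  ipdot : ipT -> ipT -> R;
  ipsym : forall x y, ipdot x y = ipdot y x;
  ippos : forall x, 0 <= ipdot x x;
  ipaddl : forall x y z, ipdot (ipadd x y) z = ipdot x z + ipdot y z;
  ipscall : forall a x y, ipdot (ipscal a x) y = a * ipdot x y }.

Definition ipnorm (V : IPS) (x : ipT V) := sqrt (ipdot V x x).

Lemma ipaddr (V : IPS) x y z : ipdot V x (ipadd V y z) = ipdot V x y + ipdot V x z.
Proof. by rewrite ipsym ipaddl (ipsym V y) (ipsym V z). Qed.
Lemma ipscalr (V : IPS) a x y : ipdot V x (ipscal V a y) = a * ipdot V x y.
Proof. by rewrite ipsym ipscall ipsym. Qed.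

Lemma ip_expand (V : IPS) x y t :
  ipdot V (ipadd V x (ipscal V t y)) (ipadd V x (ipscal V t y)) =
  ipdot V x x + 2 * t * ipdot V x y + t * t * ipdot V y y.
Proof. rewrite !ipaddl !ipaddr !ipscall !ipscalr (ipsym V y x). ring. Qed.

Lemma ip_CS2 (V : IPS) x y : ipdot V x y * ipdot V x y <= ipdot V x x * ipdot V y y.
Proof.
have H := fun t => ip_expand V x y t.
have P := fun t => ippos V (ipadd V x (ipscal V t y)).
have Hx := ippos V x. have Hy := ippos V y.
destruct (Req_dec (ipdot V y y) 0) as [E|E].
- destruct (Req_dec (ipdot V x y) 0) as [E2|E2]; first by rewrite E2; nra.
  exfalso. have H1 := P (- (ipdot V x x + 1) / (2 * ipdot V x y)).
  rewrite H E in H1.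
  have : 2 * (- (ipdot V x x + 1) / (2 * ipdot V x y)) * ipdot V x y = - (ipdot V x x + 1).
    field; lra.
  nra.
- have Hy' : 0 < ipdot V y y by lra.
  have H1 := P (- (ipdot V x y) / ipdot V y y).
  rewrite H in H1.
  have : ipdot V x x + 2 * (- ipdot V x y / ipdot V y y) * ipdot V x y +
    - ipdot V x y / ipdot V y y * (- ipdot V x y / ipdot V y y) * ipdot V y y =
    (ipdot V x x * ipdot V y y - ipdot V x y * ipdot V x y) / ipdot V y y by field; lra.
  move=> Heq. rewrite Heq in H1.
  have := Rmult_le_pos _ _ H1 (Rlt_le _ _ Hy'). rewrite /Rdiv Rmult_assoc Rinv_l; lra.
Qed.

Lemma ip_CS (V : IPS) x y : Rabs (ipdot V x y) <= ipnorm V x * ipnorm V y.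
Proof.
rewrite /ipnorm -sqrt_mult; try exact: ippos.
rewrite -(sqrt_Rsqr_abs). apply sqrt_le_1_alt. rewrite /Rsqr. exact: ip_CS2.
Qed.

Lemma ipnorm_pos (V : IPS) x : 0 <= ipnorm V x.
Proof. exact: sqrt_pos. Qed.

Lemma ipnorm_sq (V : IPS) x : ipnorm V x * ipnorm V x = ipdot V x x.
Proof. apply sqrt_sqrt; exact: ippos. Qed.

Lemma ip_triangle (V : IPS) x y : ipnorm V (ipadd V x y) <= ipnorm V x + ipnorm V y.
Proof.
have Hxy := ip_CS V x y. have Hx := ipnorm_pos V x. have Hy := ipnorm_pos V y.
apply Rsqr_incr_0_var; last by lra.
rewrite /Rsqr ipnorm_sq ipaddl !ipaddr -!ipnorm_sq (ipsym V y x).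
have := Rle_abs (ipdot V x y). nra.
Qed.

Lemma ipnorm_scal (V : IPS) a x : ipnorm V (ipscal V a x) = Rabs a * ipnorm V x.
Proof.
rewrite /ipnorm ipscall ipscalr -Rmult_assoc sqrt_mult; first last.
- exact: ippos.
- nra.
by rewrite -sqrt_Rsqr_abs.
Qed.

Definition scal1 {d} (a : R) (u : blk d) : blk d := fun j => a * u j.

Program Definition IP1 (d : nat) : IPS := mkIPS (blk d) add1 scal1 dot1 _ _ _ _.
Next Obligation. rewrite /dot1; apply: sumR_ext => j; ring. Qed.
Next Obligation. rewrite /dot1; apply: sumR_nonneg => j; nra. Qed.
Next Obligation. rewrite /dot1 /add1 -sumR_add; apply: sumR_ext => j; ring. Qed.
Next Obligation. rewrite /dot1 /scal1 -sumR_scal; apply: sumR_ext => j; ring. Qed.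

Lemma sub1_add {d} (u v : blk d) : sub1 u v = add1 u (scal1 (-1) v).
Proof. apply functional_extensionality => j; rewrite /sub1 /add1 /scal1; ring. Qed.

Lemma dot1_sym {d} (u v : blk d) : dot1 u v = dot1 v u.
Proof. exact: (ipsym (IP1 d)). Qed.
Lemma dot1_CS {d} (u v : blk d) : Rabs (dot1 u v) <= norm1 u * norm1 v.
Proof. exact: (ip_CS (IP1 d)). Qed.
Lemma norm1_pos {d} (u : blk d) : 0 <= norm1 u.
Proof. exact: sqrt_pos. Qed.
Lemma norm1_sq {d} (u : blk d) : norm1 u * norm1 u = dot1 u u.
Proof. exact: (ipnorm_sq (IP1 d)). Qed.
Lemma norm1_add {d} (u v : blk d) : norm1 (add1 u v) <= norm1 u + norm1 v.
Proof. exact: (ip_triangle (IP1 d)). Qed.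
Lemma norm1_scal {d} a (u : blk d) : norm1 (scal1 a u) = Rabs a * norm1 u.
Proof. exact: (ipnorm_scal (IP1 d)). Qed.
Lemma norm1_opp {d} (u v : blk d) : norm1 (sub1 u v) = norm1 (sub1 v u).
Proof.
have -> : sub1 u v = scal1 (-1) (sub1 v u).
  apply functional_extensionality => j; rewrite /sub1 /scal1; ring.
rewrite norm1_scal Rabs_Ropp Rabs_R1; ring.
Qed.
Lemma norm1_tri {d} (u v w : blk d) : norm1 (sub1 u w) <= norm1 (sub1 u v) + norm1 (sub1 v w).
Proof.
have -> : sub1 u w = add1 (sub1 u v) (sub1 v w).
  apply functional_extensionality => j; rewrite /sub1 /add1; ring.
exact: norm1_add.
Qed.
Lemma dot1_add_l {d} (u v w : blk d) : dot1 (add1 u v) w = dot1 u w + dot1 v w.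
Proof. exact: (ipaddl (IP1 d)). Qed.
Lemma dot1_scal_l {d} a (u w : blk d) : dot1 (scal1 a u) w = a * dot1 u w.
Proof. exact: (ipscall (IP1 d)). Qed.
Lemma dot1_sub_l {d} (u v w : blk d) : dot1 (sub1 u v) w = dot1 u w - dot1 v w.
Proof. rewrite sub1_add dot1_add_l dot1_scal_l; ring. Qed.
Lemma dot1_sub_r {d} (u v w : blk d) : dot1 w (sub1 u v) = dot1 w u - dot1 w v.
Proof. rewrite !(dot1_sym w) dot1_sub_l //. Qed.
Lemma dot1_add_r {d} (u v w : blk d) : dot1 w (add1 u v) = dot1 w u + dot1 w v.
Proof. rewrite !(dot1_sym w) dot1_add_l //. Qed.
Lemma dot1_scal_r {d} a (u w : blk d) : dot1 w (scal1 a u) = a * dot1 w u.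
Proof. rewrite !(dot1_sym w) dot1_scal_l //. Qed.

Program Definition IPB (N : nat) (nb : 'I_N -> nat) : IPS :=
  mkIPS (bvec N nb) badd bscal bdot _ _ _ _.
Next Obligation. rewrite /bdot; apply: sumR_ext => i; exact: dot1_sym. Qed.
Next Obligation. rewrite /bdot; apply: sumR_nonneg => i; exact: (ippos (IP1 _)). Qed.
Next Obligation. rewrite /bdot -sumR_add; apply: sumR_ext => i; exact: (ipaddl (IP1 _)). Qed.
Next Obligation. rewrite /bdot -sumR_scal; apply: sumR_ext => i; exact: (ipscall (IP1 _)). Qed.

Definition wdot {N nb} (w : 'I_N -> R) (x y : bvec N nb) : R :=
  sumR (fun i => w i * dot1 (x i) (y i)).

Program Definition IPW (N : nat) (nb : 'I_N -> nat) (w : 'I_N -> R) (Hw : forall i, 0 <= w i) : IPS :=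
  mkIPS (bvec N nb) badd bscal (wdot w) _ _ _ _.
Next Obligation. rewrite /wdot; apply: sumR_ext => i; rewrite dot1_sym //. Qed.
Next Obligation. rewrite /wdot; apply: sumR_nonneg => i; apply Rmult_le_pos => //; exact: (ippos (IP1 _)). Qed.
Next Obligation. rewrite /wdot -sumR_add; apply: sumR_ext => i; rewrite -Rmult_plus_distr_l; congr (_ * _); exact: dot1_add_l. Qed.
Next Obligation. rewrite /wdot -sumR_scal; apply: sumR_ext => i; rewrite -Rmult_assoc (Rmult_comm a) Rmult_assoc; congr (_ * _); exact: dot1_scal_l. Qed.

Lemma bvec_ext {N nb} (x y : bvec N nb) : (forall i j, x i j = y i j) -> x = y.
Proof.
move=> H. apply functional_extensionality_dep => i. apply functional_extensionality => j. exact: H.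
Qed.

Section BVL.
Context {N : nat} {nb : 'I_N -> nat}.
Implicit Types x y z : bvec N nb.

Lemma bdot_sym x y : bdot x y = bdot y x.
Proof. exact: (ipsym (IPB N nb)). Qed.
Lemma bdot_pos x : 0 <= bdot x x.
Proof. exact: (ippos (IPB N nb)). Qed.
Lemma bdot_CS x y : Rabs (bdot x y) <= bnorm x * bnorm y.
Proof. exact: (ip_CS (IPB N nb)). Qed.
Lemma bnorm_pos x : 0 <= bnorm x.
Proof. exact: sqrt_pos. Qed.
Lemma bnorm_sq x : bnorm x * bnorm x = bdot x x.
Proof. exact: (ipnorm_sq (IPB N nb)). Qed.
Lemma bnorm_add x y : bnorm (badd x y) <= bnorm x + bnorm y.
Proof. exact: (ip_triangle (IPB N nb)). Qed.
Lemma bnorm_scal a x : bnorm (bscal a x) = Rabs a * bnorm x.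
Proof. exact: (ipnorm_scal (IPB N nb)). Qed.
Lemma bdot_add_l x y z : bdot (badd x y) z = bdot x z + bdot y z.
Proof. exact: (ipaddl (IPB N nb)). Qed.
Lemma bdot_scal_l a x z : bdot (bscal a x) z = a * bdot x z.
Proof. exact: (ipscall (IPB N nb)). Qed.
Lemma bsub_add x y : bsub x y = badd x (bscal (-1) y).
Proof. apply: bvec_ext => i j; rewrite /bsub /badd /bscal; ring. Qed.
Lemma bdot_sub_l x y z : bdot (bsub x y) z = bdot x z - bdot y z.
Proof. rewrite bsub_add bdot_add_l bdot_scal_l; ring. Qed.
Lemma bdot_sub_r x y z : bdot z (bsub x y) = bdot z x - bdot z y.
Proof. rewrite !(bdot_sym z) bdot_sub_l //. Qed.
Lemma bnorm_opp x y : bnorm (bsub x y) = bnorm (bsub y x).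
Proof.
have -> : bsub x y = bscal (-1) (bsub y x) by apply: bvec_ext => i j; rewrite /bsub /bscal; ring.
rewrite bnorm_scal Rabs_Ropp Rabs_R1; ring.
Qed.
Lemma bnorm_tri x y z : bnorm (bsub x z) <= bnorm (bsub x y) + bnorm (bsub y z).
Proof.
have -> : bsub x z = badd (bsub x y) (bsub y z) by apply: bvec_ext => i j; rewrite /bsub /badd; ring.
exact: bnorm_add.
Qed.
Lemma bnorm_ext x y : (forall i j, x i j = y i j) -> bnorm x = bnorm y.
Proof. by move=> /bvec_ext ->. Qed.
Lemma bnorm_self x : bnorm (bsub x x) = 0.
Proof.
have -> : bsub x x = bscal 0 x by apply: bvec_ext => i j; rewrite /bsub /bscal; ring.
rewrite bnorm_scal Rabs_R0; ring.
Qed.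

Lemma norm1_le_bnorm x i : norm1 (x i) <= bnorm x.
Proof.
apply sqrt_le_1_alt. rewrite /bdot. apply: (sumR_single (fun i => dot1 (x i) (x i))).
move=> j; exact: (ippos (IP1 _)).
Qed.

Lemma abs_le_norm1 {d} (u : blk d) j : Rabs (u j) <= norm1 u.
Proof.
rewrite -sqrt_Rsqr_abs. apply sqrt_le_1_alt. rewrite /Rsqr /dot1.
apply: (sumR_single (fun j => u j * u j)). move=> k; nra.
Qed.

Lemma sqrt_sum_le {n} (a : 'I_n -> R) : (forall i, 0 <= a i) ->
  sqrt (sumR (fun i => a i * a i)) <= sumR a.
Proof.
move=> H. have Hs := sumR_nonneg a H. rewrite -(sqrt_square (sumR a)) //.
apply sqrt_le_1_alt. exact: sumR_sq_le.
Qed.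

Lemma norm1_le_sum {d} (u : blk d) : norm1 u <= sumR (fun j => Rabs (u j)).
Proof.
apply: Rle_trans (sqrt_sum_le (fun j => Rabs (u j)) (fun j => Rabs_pos _)).
apply sqrt_le_1_alt. rewrite /dot1. apply: sumR_le => j. rewrite -Rabs_mult. apply Rle_abs.
Qed.

Lemma bnorm_le_sum x : bnorm x <= sumR (fun i => norm1 (x i)).
Proof.
apply: Rle_trans (sqrt_sum_le (fun i => norm1 (x i)) (fun i => norm1_pos _)).
apply sqrt_le_1_alt. rewrite /bdot. apply: sumR_le => i. rewrite norm1_sq; lra.
Qed.

Definition wn (w : 'I_N -> R) x := sqrt (wnorm2 w x).

Lemma wnorm2_wdot w x : wnorm2 w x = wdot w x x.
Proof. by []. Qed.

Lemma wdot_sym w x y : wdot w x y = wdot w y x.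
Proof. rewrite /wdot; apply: sumR_ext => i; rewrite dot1_sym //. Qed.

Lemma wn_pos w x : 0 <= wn w x.
Proof. exact: sqrt_pos. Qed.

Lemma wnorm2_pos w x : (forall i, 0 <= w i) -> 0 <= wnorm2 w x.
Proof. move=> Hw; exact: (ippos (IPW N nb w Hw)). Qed.

Lemma wn_sq w x : (forall i, 0 <= w i) -> wn w x * wn w x = wnorm2 w x.
Proof. move=> Hw; exact: (ipnorm_sq (IPW N nb w Hw)). Qed.

Lemma wdot_CS w x y : (forall i, 0 <= w i) -> Rabs (wdot w x y) <= wn w x * wn w y.
Proof. move=> Hw; exact: (ip_CS (IPW N nb w Hw)). Qed.

Lemma wdot_add_l w x y z : (forall i, 0 <= w i) -> wdot w (badd x y) z = wdot w x z + wdot w y z.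
Proof. move=> Hw; exact: (ipaddl (IPW N nb w Hw)). Qed.
Lemma wdot_scal_l w a x z : (forall i, 0 <= w i) -> wdot w (bscal a x) z = a * wdot w x z.
Proof. move=> Hw; exact: (ipscall (IPW N nb w Hw)). Qed.
Lemma wdot_sub_l w x y z : (forall i, 0 <= w i) -> wdot w (bsub x y) z = wdot w x z - wdot w y z.
Proof. move=> Hw; rewrite bsub_add wdot_add_l // wdot_scal_l //; ring. Qed.
Lemma wdot_sub_r w x y z : (forall i, 0 <= w i) -> wdot w z (bsub x y) = wdot w z x - wdot w z y.
Proof. move=> Hw; rewrite !(wdot_sym w z) wdot_sub_l //. Qed.
Lemma wdot_add_r w x y z : (forall i, 0 <= w i) -> wdot w z (badd x y) = wdot w z x + wdot w z y.
Proof. move=> Hw; rewrite !(wdot_sym w z) wdot_add_l //. Qed.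
Lemma wdot_scal_r w a x z : (forall i, 0 <= w i) -> wdot w z (bscal a x) = a * wdot w z x.
Proof. move=> Hw; rewrite !(wdot_sym w z) wdot_scal_l //. Qed.

Lemma wn_add w x y : (forall i, 0 <= w i) -> wn w (badd x y) <= wn w x + wn w y.
Proof. move=> Hw; exact: (ip_triangle (IPW N nb w Hw)). Qed.
Lemma wn_tri w x y z : (forall i, 0 <= w i) -> wn w (bsub x z) <= wn w (bsub x y) + wn w (bsub y z).
Proof.
move=> Hw.
have -> : bsub x z = badd (bsub x y) (bsub y z) by apply: bvec_ext => i j; rewrite /bsub /badd; ring.
exact: wn_add.
Qed.
Lemma wn_opp w x y : (forall i, 0 <= w i) -> wn w (bsub x y) = wn w (bsub y x).
Proof.
move=> Hw.
have -> : bsub x y = bscal (-1) (bsub y x) by apply: bvec_ext => i j; rewrite /bsub /bscal; ring.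
have := ipnorm_scal (IPW N nb w Hw) (-1) (bsub y x). rewrite /ipnorm /= /wn !wnorm2_wdot => ->.
rewrite Rabs_Ropp Rabs_R1; ring.
Qed.

Lemma wnorm2_le w M x : (forall i, w i <= M) -> wnorm2 w x <= M * bdot x x.
Proof.
move=> H. rewrite /wnorm2 /bdot -sumR_scal. apply: sumR_le => i.
apply Rmult_le_compat_r; [exact: (ippos (IP1 _))| exact: H].
Qed.
Lemma wnorm2_ge w m x : (forall i, m <= w i) -> m * bdot x x <= wnorm2 w x.
Proof.
move=> H. rewrite /wnorm2 /bdot -sumR_scal. apply: sumR_le => i.
apply Rmult_le_compat_r; [exact: (ippos (IP1 _))| exact: H].
Qed.

Lemma wn_le w M x : 0 <= M -> (forall i, w i <= M) -> wn w x <= sqrt M * bnorm x.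
Proof.
move=> HM H. rewrite /wn /bnorm -sqrt_mult //; last exact: bdot_pos.
apply sqrt_le_1_alt. exact: wnorm2_le.
Qed.
Lemma wn_ge w m x : 0 <= m -> (forall i, m <= w i) -> sqrt m * bnorm x <= wn w x.
Proof.
move=> Hm H. rewrite /wn /bnorm -sqrt_mult //; last exact: bdot_pos.
apply sqrt_le_1_alt. exact: wnorm2_ge.
Qed.

End BVL.

From Coquelicot Require Import Coquelicot.

Definition lpt {d} (x h : blk d) (t : R) : blk d := fun j => x j + t * h j.

Lemma deriv_line {d} (f : blk d -> R) g (x h : blk d) t :
  is_gradient f g -> derivable_pt_lim (fun t => f (lpt x h t)) t (dot1 (g (lpt x h t)) h).
Proof.
move=> Hg eps Heps.
set nh := norm1 h. have Hnh : 0 <= nh := norm1_pos h.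
have Heps' : 0 < eps / (2 * (nh + 1)) by apply Rdiv_lt_0_compat; lra.
have [del [Hdel H]] := Hg (lpt x h t) _ Heps'.
have Hd : 0 < del / (nh + 1) by apply Rdiv_lt_0_compat; lra.
exists (mkposreal _ Hd) => s Hs0 Hs /=. simpl in Hs.
have Hn : norm1 (scal1 s h) < del.
  rewrite norm1_scal. have Has := Rabs_pos s.
  have : Rabs s * (nh + 1) < del.
    have := Rmult_lt_compat_r (nh + 1) _ _ ltac:(lra) Hs.
    rewrite /Rdiv Rmult_assoc Rinv_l; lra.
  rewrite -/nh. nra.
have := H _ Hn.
have -> : add1 (lpt x h t) (scal1 s h) = lpt x h (t + s).
  apply functional_extensionality => j; rewrite /add1 /lpt /scal1; ring.
rewrite dot1_scal_r norm1_scal -/nh => H2.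
set D := dot1 (g (lpt x h t)) h in H2 *.
have Has : 0 < Rabs s by apply Rabs_pos_lt.
have -> : (f (lpt x h (t + s)) - f (lpt x h t)) / s - D =
  (f (lpt x h (t + s)) - f (lpt x h t) - s * D) / s by field.
rewrite Rabs_div //. apply (Rmult_lt_reg_r (Rabs s)) => //.
rewrite /Rdiv Rmult_assoc Rinv_l; last lra. rewrite Rmult_1_r.
apply: Rle_lt_trans H2 _.
have : eps / (2 * (nh + 1)) * nh < eps.
  have -> : eps / (2 * (nh + 1)) * nh = eps * (nh / (2 * (nh + 1))) by field; lra.
  have : nh / (2 * (nh + 1)) < 1.
    apply (Rmult_lt_reg_r (2 * (nh + 1))); first lra.
    rewrite /Rdiv Rmult_assoc Rinv_l; lra.
  have : 0 <= nh / (2 * (nh + 1)) by apply Rdiv_le_0_compat; lra.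
  nra.
nra.
Qed.

Lemma descent_lemma {d} (f : blk d -> R) g L (x y : blk d) :
  is_gradient f g -> lipschitz_grad g L -> 0 <= L ->
  Rabs (f y - f x - dot1 (g x) (sub1 y x)) <= L / 2 * (norm1 (sub1 y x) * norm1 (sub1 y x)).
Proof.
move=> Hg HL HL0.
set h := sub1 y x. set D0 := dot1 (g x) h. set nh2 := norm1 h * norm1 h.
have Ex : lpt x h 0 = x by apply functional_extensionality => j; rewrite /lpt; ring.
have Ey : lpt x h 1 = y by apply functional_extensionality => j; rewrite /lpt /h /sub1; ring.
have Hbound : forall t, 0 <= t -> Rabs (dot1 (g (lpt x h t)) h - D0) <= L * t * nh2.
  move=> t Ht. rewrite /D0 -dot1_sub_l. apply: Rle_trans (dot1_CS _ _) _.
  have Hl := HL (lpt x h t) x.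
  have E : sub1 (lpt x h t) x = scal1 t h.
    apply functional_extensionality => j; rewrite /lpt /sub1 /scal1; ring.
  move: Hl; rewrite E norm1_scal Rabs_pos_eq // => Hl.
  rewrite /nh2. have := norm1_pos h. have := norm1_pos (sub1 (g (lpt x h t)) (g x)). nra.
have Hq : forall s t, derivable_pt_lim (fun t => t * D0 + s * (L / 2 * t * t * nh2)) t
   (D0 + s * (L * t * nh2)).
  move=> s t. apply is_derive_Reals. auto_derive => //. field.
have Hpsi : forall s t, derivable_pt_lim
   (fun t => f (lpt x h t) - (t * D0 + s * (L / 2 * t * t * nh2))) t
   (dot1 (g (lpt x h t)) h - (D0 + s * (L * t * nh2))).
  move=> s t. apply: (derivable_pt_lim_minus (fun t => f (lpt x h t))); [exact: deriv_line | exact: Hq].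
have [c1 [E1 Hc1]] := MVT_cor2 _ _ 0 1 Rlt_0_1 (fun c _ => Hpsi 1 c).
have [c2 [E2 Hc2]] := MVT_cor2 _ _ 0 1 Rlt_0_1 (fun c _ => Hpsi (-1) c).
rewrite Ex Ey in E1 E2.
have B1 := Hbound c1 ltac:(lra). have B2 := Hbound c2 ltac:(lra).
apply Rabs_le. move: B1 B2 => /Rabs_le_between B1 /Rabs_le_between B2.
have Hnh : 0 <= nh2 by rewrite /nh2; have := norm1_pos h; nra.
split; nra.
Qed.

Lemma small_lambda K B : 0 <= B -> (forall l, 0 < l <= 1 -> K <= l * B) -> K <= 0.
Proof.
move=> HB H. apply Rnot_lt_le => HK.
have Hl : 0 < K / (K + B + 1) <= 1.
  split; first by apply Rdiv_lt_0_compat; lra.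
  apply (Rmult_le_reg_r (K + B + 1)); first lra. rewrite /Rdiv Rmult_assoc Rinv_l; lra.
have := H _ Hl.
have -> : K / (K + B + 1) * B = K * (B / (K + B + 1)) by field; lra.
have : B / (K + B + 1) < 1.
  apply (Rmult_lt_reg_r (K + B + 1)); first lra. rewrite /Rdiv Rmult_assoc Rinv_l; lra.
nra.
Qed.

Section Prox.
Context {N : nat} {nb : 'I_N -> nat}.
Variable dom : bvec N nb -> Prop.
Variable G : bvec N nb -> R.
Variable w : 'I_N -> R.
Hypothesis Hw : forall i, 0 <= w i.
Hypothesis Hconv : convex_ext dom G.

Lemma prox_VI u z y : in_prox dom G w u z -> dom y ->
  G z - G y <= wdot w (bsub u z) (bsub z y).
Proof.
move=> [Hz Hmin] Hy.
set K := G z - G y - wdot w (bsub u z) (bsub z y).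
suff : K <= 0 by rewrite /K; lra.
apply: (small_lambda K (/2 * wnorm2 w (bsub y z))).
  have := wnorm2_pos w (bsub y z) Hw; lra.
move=> l Hl.
have [Hd Hc] := Hconv y z l Hy Hz ltac:(lra).
have Hm := Hmin _ Hd.
have E : bsub (badd (bscal l y) (bscal (1 - l) z)) u = badd (bsub z u) (bscal l (bsub y z)).
  apply: bvec_ext => i j; rewrite /bsub /badd /bscal; ring.
rewrite E in Hm.
have Ex := ip_expand (IPW N nb w Hw) (bsub z u) (bsub y z) l. simpl in Ex.
rewrite !wnorm2_wdot Ex in Hm.
have E2 : wdot w (bsub z u) (bsub y z) = wdot w (bsub u z) (bsub z y).
  rewrite !wdot_sub_l // !wdot_sub_r //. ring.
rewrite E2 in Hm. rewrite -!wnorm2_wdot in Hm.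
apply (Rmult_le_reg_l l); first lra.
rewrite /K. nra.
Qed.

Lemma prox_nonexp u1 u2 z1 z2 : in_prox dom G w u1 z1 -> in_prox dom G w u2 z2 ->
  wn w (bsub z1 z2) <= wn w (bsub u1 u2).
Proof.
move=> H1 H2.
have V1 := prox_VI u1 z1 z2 H1 (proj1 H2).
have V2 := prox_VI u2 z2 z1 H2 (proj1 H1).
have Key : wnorm2 w (bsub z1 z2) <= wdot w (bsub u1 u2) (bsub z1 z2).
  move: V1 V2. rewrite !wnorm2_wdot !wdot_sub_l // !wdot_sub_r //.
  rewrite (wdot_sym w z2 z1) (wdot_sym w u2 z1) (wdot_sym w u1 z2). lra.
have CS := wdot_CS w (bsub u1 u2) (bsub z1 z2) Hw.
have := Rle_abs (wdot w (bsub u1 u2) (bsub z1 z2)).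
rewrite -(wn_sq w (bsub z1 z2) Hw) in Key.
have := wn_pos w (bsub z1 z2). have := wn_pos w (bsub u1 u2).
move=> P1 P2 A.
destruct (Req_dec (wn w (bsub z1 z2)) 0) as [E|E]; first by rewrite E.
have : 0 < wn w (bsub z1 z2) by lra.
nra.
Qed.

End Prox.

Definition sincr (phi : nat -> nat) := forall n, (phi n < phi (S n))%nat.

Lemma sincr_ge phi : sincr phi -> forall n, (n <= phi n)%nat.
Proof. move=> H; elim => [|n IH] //. have := H n. lia. Qed.

Lemma sincr_mono phi : sincr phi -> forall m n, (m <= n)%nat -> (phi m <= phi n)%nat.
Proof.
move=> H m n Hmn. elim: n Hmn => [|n IH] Hmn.
- have -> : m = 0%nat by lia. done.
- case: (ltngtP m (S n)) => Hc; last by rewrite Hc.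
  + have := IH ltac:(lia). have := H n. lia.
  + lia.
Qed.

Lemma sincr_comp phi psi : sincr phi -> sincr psi -> sincr (fun n => phi (psi n)).
Proof.
move=> H1 H2 n. have := sincr_mono phi H1 (S (psi n)) (psi (S n)) (H2 n). have := H1 (psi n). lia.
Qed.

Lemma cv_sub (a : nat -> R) l phi : sincr phi -> Un_cv a l -> Un_cv (fun n => a (phi n)) l.
Proof.
move=> Hp H eps He. have [K HK] := H eps He. exists K => n Hn.
apply: HK. apply/leP. have := sincr_ge phi Hp n. move/leP: Hn. lia.
Qed.

Lemma BW1 (a : nat -> R) B : (forall k, Rabs (a k) <= B) ->
  exists phi, sincr phi /\ exists l, Un_cv (fun n => a (phi n)) l.
Proof.
move=> Hb.
have [l Hl] := Bolzano_Weierstrass a _ (compact_P3 (- B) B) (fun k => Rabs_le_bt _ _ (Hb k)).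
have Hp : forall (K n : nat), exists p, (K <= p)%nat /\ Rabs (a p - l) < / (INR n + 1).
  move=> K n. have Hpos : 0 < / (INR n + 1) by apply Rinv_0_lt_compat; have := pos_INR n; lra.
  have [p [Hp1 Hp2]] := Hl (disc l (mkposreal _ Hpos)) K
    (ex_intro _ (mkposreal _ Hpos) (fun y H => H)).
  exists p; split; [exact/leP | exact: Hp2].
pose pick K n := proj1_sig (constructive_indefinite_description _ (Hp K n)).
have Hpick : forall K n, (K <= pick K n)%nat /\ Rabs (a (pick K n) - l) < / (INR n + 1).
  move=> K n. exact: proj2_sig (constructive_indefinite_description _ (Hp K n)).
pose fix phi n := match n with 0 => pick 0%nat 0%nat | S m => pick (S (phi m)) (S m) end.
exists phi. split.
- move=> n /=. exact: (proj1 (Hpick _ _)).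
- exists l => eps He.
  have [n0 Hn0] := INR_archimed eps 1 He.
  exists n0 => n Hn. rewrite /R_dist.
  have Hn' : (n0 <= n)%nat by apply/leP.
  have Hphi : Rabs (a (phi n) - l) < / (INR n + 1) by case: n Hn Hn' => [|n] _ _ /=; exact: (proj2 (Hpick _ _)).
  apply: Rlt_le_trans Hphi _.
  have H1 : INR n0 <= INR n by apply le_INR; apply/leP.
  have H0 := pos_INR n0.
  rewrite -(Rinv_inv eps). apply Rinv_le_contravar; first by apply Rinv_0_lt_compat.
  apply (Rmult_le_reg_r eps) => //. rewrite Rinv_l; last lra. nra.
Qed.

Lemma In_of_mem {T : eqType} (t : T) (s : seq T) : t \in s -> List.In t s.
Proof.
elim: s => [|y s IH] //=. rewrite inE => /orP [/eqP ->|H]; [by left| right; exact: IH].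
Qed.

Lemma BW_list {N nb} (u : nat -> bvec N nb) B (cs : list (bvec N nb -> R)) :
  (forall c, List.In c cs -> forall k, Rabs (c (u k)) <= B) ->
  exists phi, sincr phi /\ forall c, List.In c cs -> exists l, Un_cv (fun n => c (u (phi n))) l.
Proof.
elim: cs => [|c cs IH] Hb.
- exists (fun n => n). split; first by move=> n; apply: ltnSn. by move=> c [].
- have [phi1 [Hp1 H1]] := IH (fun c' Hc' => Hb c' (or_intror Hc')).
  have [phi2 [Hp2 [l Hl]]] := BW1 (fun n => c (u (phi1 n))) B (fun k => Hb c (or_introl erefl) _).
  exists (fun n => phi1 (phi2 n)). split; first exact: sincr_comp.
  move=> c' [<-|Hc'].
  + by exists l.
  + have [l' Hl'] := H1 c' Hc'. exists l'. exact: (cv_sub (fun n => c' (u (phi1 n)))).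
Qed.

Lemma sumR_cv {m} (g : nat -> 'I_m -> R) (l : 'I_m -> R) :
  (forall i, Un_cv (fun n => g n i) (l i)) -> Un_cv (fun n => sumR (g n)) (sumR l).
Proof.
elim: m g l => [|m IH] g l H.
- rewrite /sumR. have E : forall (h : 'I_0 -> R), \big[Rplus/0]_(i < 0) h i = 0 by move=> h; rewrite big_ord0.
  rewrite E. move=> eps He; exists 0%nat => n _. rewrite E /R_dist. rewrite Rminus_0_r Rabs_R0. lra.
- have E : forall (h : 'I_m.+1 -> R), sumR h = sumR (fun i : 'I_m => h (widen_ord (leqnSn m) i)) + h ord_max.
    move=> h. by rewrite /sumR big_ord_recr.
  rewrite E. have -> : (fun n => sumR (g n)) = (fun n => sumR (fun i : 'I_m => g n (widen_ord (leqnSn m) i)) + g n ord_max).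
    apply functional_extensionality => n. by rewrite E.
  apply: CV_plus; last exact: H.
  apply: (IH (fun n i => g n (widen_ord (leqnSn m) i))). move=> i; exact: H.
Qed.

Lemma squeeze0 (a b : nat -> R) : (forall n, 0 <= a n <= b n) -> Un_cv b 0 -> Un_cv a 0.
Proof.
move=> H Hb eps He. have [K HK] := Hb eps He. exists K => n Hn. have := HK n Hn. have := H n.
rewrite /R_dist !Rminus_0_r. move=> [H1 H2]. rewrite (Rabs_pos_eq (a n)) // => H3.
have := Rle_abs (b n). lra.
Qed.

Lemma BW_bvec {N nb} (u : nat -> bvec N nb) B : (forall k, bnorm (u k) <= B) ->
  exists xbar, forall eps, 0 < eps -> forall K, exists k, (K <= k)%nat /\ bnorm (bsub (u k) xbar) < eps.
Proof.
move=> Hb.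
set cs := List.flat_map (fun i => List.map (fun j => fun y : bvec N nb => y i j) (enum 'I_(nb i))) (enum 'I_N).
have Hin : forall i j, List.In (fun y : bvec N nb => y i j) cs.
  move=> i j. apply List.in_flat_map. exists i. split; first by apply: In_of_mem; rewrite mem_enum.
  apply: (List.in_map (fun j : 'I_(nb i) => fun y : bvec N nb => y i j)). apply: In_of_mem; rewrite mem_enum //.
have Hcb : forall c, List.In c cs -> forall k, Rabs (c (u k)) <= B.
  move=> c /List.in_flat_map [i [_ /List.in_map_iff [j [<- _]]]] k.
  apply: Rle_trans (abs_le_norm1 (u k i) j) _. apply: Rle_trans (norm1_le_bnorm (u k) i) _. exact: Hb.
have [phi [Hphi Hl]] := BW_list u B cs Hcb.
have Hl2 : forall i j, exists l, Un_cv (fun n => u (phi n) i j) l by move=> i j; exact: Hl _ (Hin i j).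
pose xbar : bvec N nb := fun i j => proj1_sig (constructive_indefinite_description _ (Hl2 i j)).
have Hx : forall i j, Un_cv (fun n => u (phi n) i j) (xbar i j).
  move=> i j. exact: proj2_sig (constructive_indefinite_description _ (Hl2 i j)).
exists xbar.
have Hcv : Un_cv (fun n => bnorm (bsub (u (phi n)) xbar)) 0.
  apply: (squeeze0 _ (fun n => sumR (fun i => sumR (fun j => Rabs (u (phi n) i j - xbar i j))))).
  - move=> n. split; first exact: bnorm_pos.
    apply: Rle_trans (bnorm_le_sum _) _. apply: sumR_le => i. exact: norm1_le_sum.
  - have E0 : sumR (fun i : 'I_N => sumR (fun j : 'I_(nb i) => 0)) = 0.
      rewrite (sumR_ext _ (fun _ => 0)); first exact: sumR_0. move=> i; exact: sumR_0.
    rewrite -E0.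
    apply: sumR_cv => i. apply: sumR_cv => j.
    move=> eps He. have [K HK] := Hx i j eps He. exists K => n Hn. have := HK n Hn.
    rewrite /R_dist Rminus_0_r Rabs_Rabsolu. done.
move=> eps He K. have [n0 Hn0] := Hcv eps He.
exists (phi (n0 + K)%nat). split; first by have := sincr_ge phi Hphi (n0 + K)%nat; lia.
have := Hn0 (n0 + K)%nat ltac:(apply/leP; lia). rewrite /R_dist Rminus_0_r.
have := bnorm_pos (bsub (u (phi (n0 + K)%nat)) xbar). move=> P. rewrite Rabs_pos_eq //.
Qed.

From Coquelicot Require Import Coquelicot.

Lemma Rpow_pos x y : 0 < Rpower x y.
Proof. rewrite /Rpower; exact: exp_pos. Qed.

Lemma Rpow_dec_exp x y z : 0 < x <= 1 -> y <= z -> Rpower x z <= Rpower x y.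
Proof.
move=> [Hx Hx1] Hyz. rewrite /Rpower.
have : ln x <= 0 by rewrite -ln_1; apply ln_le; lra.
move=> Hl. destruct (Req_dec (z * ln x) (y * ln x)) as [E|E]; first by rewrite E; lra.
apply Rlt_le, exp_increasing. nra.
Qed.

Lemma Rpow_lt1 x y : 0 < x < 1 -> 0 < y -> Rpower x y < 1.
Proof.
move=> [Hx Hx1] Hy. rewrite /Rpower -exp_0. apply exp_increasing.
have : ln x < 0 by rewrite -ln_1; apply ln_increasing; lra.
nra.
Qed.

Lemma Rpow_inv x a : 0 < a -> Rpower (Rpower x a) (/ a) = x \/ x <= 0.
Proof.
move=> Ha. destruct (Rle_lt_dec x 0) as [H|H]; first by right.
left. rewrite Rpower_mult Rinv_r; last lra. exact: Rpower_1.
Qed.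

Lemma Rpow_inv' x a : 0 < x -> 0 < a -> Rpower (Rpower x a) (/ a) = x.
Proof. move=> Hx Ha. rewrite Rpower_mult Rinv_r; last lra. exact: Rpower_1. Qed.

Definition pw (t a : R) := if Rle_dec t 0 then 0 else Rpower t a.

Lemma pw_pos t a : 0 < t -> pw t a = Rpower t a.
Proof. move=> H. rewrite /pw. destruct (Rle_dec t 0); [lra|reflexivity]. Qed.
Lemma pw_nonpos t a : t <= 0 -> pw t a = 0.
Proof. move=> H. rewrite /pw. destruct (Rle_dec t 0); [reflexivity|contradiction]. Qed.
Lemma pw_nneg t a : 0 <= pw t a.
Proof. rewrite /pw. destruct (Rle_dec t 0); [apply Rle_refl| exact: Rlt_le (Rpow_pos _ _)]. Qed.

Lemma pw_mono a s t : 0 <= a -> s <= t -> pw s a <= pw t a.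
Proof.
move=> Ha Hst. destruct (Rle_lt_dec s 0) as [H|H].
- rewrite pw_nonpos //. exact: pw_nneg.
- rewrite !pw_pos //; last lra. apply Rle_Rpower_l => //; lra.
Qed.

Lemma pw_small a : 0 < a -> forall eps, 0 < eps -> exists del, 0 < del /\ forall t, t < del -> pw t a < eps.
Proof.
move=> Ha eps He. exists (Rpower eps (/ a)). split; first exact: Rpow_pos.
move=> t Ht. destruct (Rle_lt_dec t 0) as [H|H]; first by rewrite pw_nonpos.
rewrite pw_pos //.
have := Rlt_Rpower_l t (Rpower eps (/ a)) a Ha (conj H Ht).
rewrite Rpower_mult Rinv_l; last lra. rewrite Rpower_1 //.
Qed.

Lemma Rpow_1_l a : Rpower 1 a = 1.
Proof. by rewrite /Rpower ln_1 Rmult_0_r exp_0. Qed.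

Lemma young_t t a : 0 < t <= 1 -> 0 < a <= 1 -> Rpower t a - a * t <= 1 - a.
Proof.
move=> [Ht Ht1] [Ha Ha1].
destruct (Req_dec t 1) as [E|E]; first by rewrite E /Rpower ln_1 Rmult_0_r exp_0; lra.
have Hd : forall c, t <= c <= 1 -> derivable_pt_lim (fun c => Rpower c a - a * c) c (a * Rpower c (a - 1) - a).
  move=> c Hc. apply: (derivable_pt_lim_minus (fun c => Rpower c a) (fun c => a * c)).
  - apply: derivable_pt_lim_power; lra.
  - apply is_derive_Reals. auto_derive => //. ring.
have [c [Ec Hc]] := MVT_cor2 _ _ t 1 ltac:(lra) Hd.
rewrite Rpow_1_l in Ec.
have : Rpower c 0 <= Rpower c (a - 1) by apply Rpow_dec_exp; lra.
rewrite Rpower_O; last lra. move=> H1.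
have : 0 <= (a * Rpower c (a - 1) - a) * (1 - t) by apply Rmult_le_pos; nra.
lra.
Qed.

Lemma pw_concave a s t : 0 < a <= 1 -> 0 <= s <= t -> 0 < t ->
  a * Rpower t (a - 1) * (t - s) <= pw t a - pw s a.
Proof.
move=> Ha Hs Ht. rewrite (pw_pos t) //.
have Hta : Rpower t a = Rpower t (a - 1) * t.
  rewrite -{3}(Rpower_1 t) // -Rpower_plus. f_equal; ring.
have Hp := Rpow_pos t (a - 1).
destruct (Req_dec s 0) as [E|E].
- rewrite E (pw_nonpos 0 a (Rle_refl 0)) Hta.
  have : 0 <= (1 - a) * (Rpower t (a - 1) * t) by apply Rmult_le_pos; nra.
  nra.
- have Hs0 : 0 < s by lra. rewrite (pw_pos s a Hs0).
  have Hst : 0 < s / t <= 1.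
    split; first by apply Rdiv_lt_0_compat; lra.
    apply (Rmult_le_reg_r t) => //. rewrite /Rdiv Rmult_assoc Rinv_l; lra.
  have Y := young_t (s / t) a Hst Ha.
  have Es : Rpower s a = Rpower t a * Rpower (s / t) a.
    rewrite Rpower_mult_distr //; last lra. f_equal. field. lra.
  rewrite Es Hta.
  have E2 : a * Rpower t (a - 1) * (t - s) = Rpower t (a - 1) * t * (a * (1 - s / t)).
    field; lra.
  rewrite E2.
  have Hpt : 0 < Rpower t (a - 1) * t by nra.
  have : a * (1 - s / t) <= 1 - Rpower (s / t) a by lra.
  move=> H. have := Rmult_le_compat_l _ _ _ (Rlt_le _ _ Hpt) H. lra.
Qed.

Lemma bnorm_blockwise {N nb} (a b : bvec N nb) c : 0 <= c ->
  (forall i, norm1 (a i) <= c * norm1 (b i)) -> bnorm a <= c * bnorm b.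
Proof.
move=> Hc H. rewrite -(sqrt_square c) // /bnorm -sqrt_mult; [|nra|exact: bdot_pos].
apply sqrt_le_1_alt. rewrite /bdot -sumR_scal. apply: sumR_le => i.
rewrite -!norm1_sq. have := H i. have := norm1_pos (a i). have := norm1_pos (b i). nra.
Qed.

Section Problem.
Variable N : nat.
Hypothesis HN : (0 < N)%nat.
Variable nb : 'I_N -> nat.
Variable f : forall i : 'I_N, blk (nb i) -> R.
Variable gf : forall i : 'I_N, blk (nb i) -> blk (nb i).
Variable L : 'I_N -> R.
Hypothesis Hgrad : forall i, is_gradient (f i) (gf i).
Hypothesis HL : forall i, 0 <= L i.
Hypothesis HLip : forall i, lipschitz_grad (gf i) (L i).
Variable domG : bvec N nb -> Prop.
Variable G : bvec N nb -> R.
Hypothesis HGconvex : convex_ext domG G.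
Variable gamma : 'I_N -> R.
Hypothesis Hgamma : forall i, 0 < gamma i /\ gamma i * L i < INR N.

Definition ww : 'I_N -> R := fun i => / gamma i.
Definition Phi (x : bvec N nb) := Fsum f x + G x.

Lemma INRN_pos : 0 < INR N.
Proof. apply lt_0_INR. apply/ltP. exact: HN. Qed.

Lemma invN_le1 : / INR N <= 1.
Proof.
have : 1 <= INR N by apply (le_INR 1); apply/leP; exact: HN.
move=> H. rewrite -Rinv_1. apply Rinv_le_contravar; lra.
Qed.

Lemma ww_pos i : 0 < ww i.
Proof. rewrite /ww. apply Rinv_0_lt_compat. exact: (proj1 (Hgamma i)). Qed.
Lemma ww_nneg i : 0 <= ww i.
Proof. exact: Rlt_le (ww_pos i). Qed.
Lemma ww_gamma i : ww i * gamma i = 1.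
Proof. rewrite /ww Rinv_l //. have := proj1 (Hgamma i); lra. Qed.

Definition Lm := 1 + sumR (fun i => Rabs (L i)).
Lemma Lm_ge i : L i <= Lm.
Proof.
have := sumR_single (fun i => Rabs (L i)) i (fun i => Rabs_pos _). have := Rle_abs (L i).
rewrite /Lm; lra.
Qed.
Lemma Lm_pos : 0 < Lm.
Proof. have := sumR_nonneg (fun i => Rabs (L i)) (fun i => Rabs_pos _). rewrite /Lm; lra. Qed.

Definition gM := 1 + sumR (fun i => Rabs (gamma i)).
Lemma gM_ge i : gamma i <= gM.
Proof.
have := sumR_single (fun i => Rabs (gamma i)) i (fun i => Rabs_pos _). have := Rle_abs (gamma i).
rewrite /gM; lra.
Qed.
Lemma gM_pos : 0 < gM.
Proof. have := sumR_nonneg (fun i => Rabs (gamma i)) (fun i => Rabs_pos _). rewrite /gM; lra. Qed.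

Definition wM := 1 + sumR (fun i => Rabs (ww i)).
Lemma wM_ge i : ww i <= wM.
Proof.
have := sumR_single (fun i => Rabs (ww i)) i (fun i => Rabs_pos _). have := Rle_abs (ww i).
rewrite /wM; lra.
Qed.
Lemma wM_pos : 0 < wM.
Proof. have := sumR_nonneg (fun i => Rabs (ww i)) (fun i => Rabs_pos _). rewrite /wM; lra. Qed.

Definition wm := / gM.
Lemma wm_pos : 0 < wm.
Proof. apply Rinv_0_lt_compat; exact: gM_pos. Qed.
Lemma wm_le i : wm <= ww i.
Proof. rewrite /wm /ww. apply Rinv_le_contravar; [exact: proj1 (Hgamma i)| exact: gM_ge]. Qed.

Definition acoef i := / 2 * (ww i - L i / INR N).
Lemma acoef_pos i : 0 < acoef i.
Proof.
rewrite /acoef /ww. have [Hg HgL] := Hgamma i. have HNp := INRN_pos.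
have : L i / INR N < / gamma i.
  apply (Rmult_lt_reg_r (gamma i * INR N)); first nra.
  have -> : L i / INR N * (gamma i * INR N) = gamma i * L i by field; lra.
  have -> : / gamma i * (gamma i * INR N) = INR N by field; lra.
  lra.
lra.
Qed.
Definition amin := / (1 + sumR (fun i => / acoef i)).
Lemma amin_pos : 0 < amin.
Proof.
apply Rinv_0_lt_compat. have := sumR_nonneg (fun i => / acoef i) (fun i => Rlt_le _ _ (Rinv_0_lt_compat _ (acoef_pos i))). lra.
Qed.
Lemma amin_le i : amin <= acoef i.
Proof.
rewrite /amin. rewrite -(Rinv_inv (acoef i)). apply Rinv_le_contravar.
- apply Rinv_0_lt_compat. exact: acoef_pos.
- have := sumR_single (fun i => / acoef i) i (fun i => Rlt_le _ _ (Rinv_0_lt_compat _ (acoef_pos i))). lra.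
Qed.

Definition Acoef := / 2 * (wM + Lm).
Lemma Acoef_ge i : / 2 * (ww i + L i / INR N) <= Acoef.
Proof.
rewrite /Acoef. have := wM_ge i. have := Lm_ge i. have := invN_le1. have := HL i. have := INRN_pos.
move=> *. have : L i / INR N <= L i.
  rewrite /Rdiv. have := Rmult_le_compat_l (L i) _ _ (HL i) invN_le1. lra.
lra.
Qed.

Lemma Fsum_expand y z :
  Rabs (Fsum f y - Fsum f z - bdot (gradF gf z) (bsub y z)) <= Lm / 2 * bdot (bsub y z) (bsub y z).
Proof.
have E : Fsum f y - Fsum f z - bdot (gradF gf z) (bsub y z) =
  sumR (fun i => / INR N * (f i (y i) - f i (z i) - dot1 (gf i (z i)) (sub1 (y i) (z i)))).
  rewrite /Fsum /bdot sumR_scal -Rmult_minus_distr_l -sumR_sub -sumR_scal -sumR_sub.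
  rewrite -sumR_scal. apply: sumR_ext => i. change (dot1 (gradF gf z i) (bsub y z i)) with (dot1 (scal1 (/ INR N) (gf i (z i))) (sub1 (y i) (z i))).
  rewrite dot1_scal_l. ring.
rewrite E. apply: Rle_trans (sumR_abs _) _.
rewrite /bdot -sumR_scal. apply: sumR_le => i.
rewrite Rabs_mult Rabs_pos_eq; last by apply Rlt_le, Rinv_0_lt_compat, INRN_pos.
have D := descent_lemma (f i) (gf i) (L i) (z i) (y i) (Hgrad i) (HLip i) (HL i).
rewrite norm1_sq in D. change (bsub y z i) with (sub1 (y i) (z i)).
have P : 0 <= dot1 (sub1 (y i) (z i)) (sub1 (y i) (z i)) by rewrite -norm1_sq; nra.
have := Lm_ge i. have := invN_le1. have Hn : 0 < / INR N by apply Rinv_0_lt_compat, INRN_pos.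
have := Rabs_pos (f i (y i) - f i (z i) - dot1 (gf i (z i)) (sub1 (y i) (z i))).
have := HL i. nra.
Qed.

Lemma gradF_lip x y : bnorm (bsub (gradF gf x) (gradF gf y)) <= Lm * bnorm (bsub x y).
Proof.
apply: bnorm_blockwise; first exact: Rlt_le Lm_pos.
move=> i. have -> : bsub (gradF gf x) (gradF gf y) i = scal1 (/ INR N) (sub1 (gf i (x i)) (gf i (y i))).
  apply functional_extensionality => j. rewrite /bsub /gradF /scal1 /sub1; ring.
rewrite norm1_scal Rabs_pos_eq; last by apply Rlt_le, Rinv_0_lt_compat, INRN_pos.
have := HLip i (x i) (y i). change (bsub x y i) with (sub1 (x i) (y i)).
have := norm1_pos (sub1 (x i) (y i)). have := norm1_pos (sub1 (gf i (x i)) (gf i (y i))).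
have := Lm_ge i. have := invN_le1. have Hn : 0 < / INR N by apply Rinv_0_lt_compat, INRN_pos.
have := HL i. nra.
Qed.

Definition Qb i (xi yi : blk (nb i)) : R :=
  / INR N * (f i xi + dot1 (gf i xi) (sub1 yi xi)) + / 2 * ww i * dot1 (sub1 yi xi) (sub1 yi xi).
Definition qq (x y : bvec N nb) : R := G y + sumR (fun i => Qb i (x i) (y i)).
Definition uu (x : bvec N nb) : bvec N nb := fun i j => x i j - gamma i * gradF gf x i j.

Lemma Qb_identity i xi yi :
  let ui := fun j => xi j - gamma i * (/ INR N * gf i xi j) in
  Qb i xi yi = / INR N * f i xi + / 2 * ww i * dot1 (sub1 yi ui) (sub1 yi ui)
     - / 2 * ww i * dot1 (sub1 xi ui) (sub1 xi ui).
Proof.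
move=> ui. rewrite /Qb /dot1 /sub1 /ui.
have Hg := proj1 (Hgamma i). have Hn := INRN_pos.
set S1 := sumR _. set S2 := sumR _. set S3 := sumR _. set S4 := sumR _.
suff : / INR N * S1 + / 2 * ww i * S2 = / 2 * ww i * S3 - / 2 * ww i * S4 by lra.
rewrite /S1 /S2 /S3 /S4 -!sumR_scal -sumR_add -sumR_sub.
apply: sumR_ext => j. rewrite /ww. field. lra.
Qed.

Lemma qq_identity x y :
  qq x y = Fsum f x + G y + / 2 * wnorm2 ww (bsub y (uu x)) - / 2 * wnorm2 ww (bsub x (uu x)).
Proof.
rewrite /qq /Fsum /wnorm2. 
have -> : sumR (fun i => Qb i (x i) (y i)) = sumR (fun i => / INR N * f i (x i) + / 2 * ww i * dot1 (bsub y (uu x) i) (bsub y (uu x) i)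
     - / 2 * ww i * dot1 (bsub x (uu x) i) (bsub x (uu x) i)).
  apply: sumR_ext => i. exact: Qb_identity.
rewrite sumR_sub sumR_add -!sumR_scal.
have -> : sumR (fun i => / 2 * ww i * dot1 (bsub y (uu x) i) (bsub y (uu x) i)) =
  sumR (fun i => / 2 * (ww i * dot1 (bsub y (uu x) i) (bsub y (uu x) i))) by apply: sumR_ext => i; ring.
have -> : sumR (fun i => / 2 * ww i * dot1 (bsub x (uu x) i) (bsub x (uu x) i)) =
  sumR (fun i => / 2 * (ww i * dot1 (bsub x (uu x) i) (bsub x (uu x) i))) by apply: sumR_ext => i; ring.
ring.
Qed.

Lemma qq_min x z y : in_T domG G gf gamma x z -> domG y -> qq x z <= qq x y.
Proof.
move=> [Hz Hm] Hy. rewrite !qq_identity. have := Hm y Hy. rewrite /uu. 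
change (fun i => / gamma i) with ww. lra.
Qed.

Lemma Qb_self i yi : Qb i yi yi = / INR N * f i yi.
Proof.
rewrite /Qb. have -> : sub1 yi yi = scal1 0 yi by apply functional_extensionality => j; rewrite /sub1 /scal1; ring.
rewrite dot1_scal_r dot1_scal_l; ring.
Qed.

Lemma Qb_lower i xi zi :
  / INR N * f i zi + acoef i * dot1 (sub1 zi xi) (sub1 zi xi) <= Qb i xi zi.
Proof.
have D := descent_lemma (f i) (gf i) (L i) xi zi (Hgrad i) (HLip i) (HL i).
rewrite norm1_sq in D. move: D => /Rabs_le_bt D.
rewrite /Qb /acoef. have Hn : 0 < / INR N by apply Rinv_0_lt_compat, INRN_pos.
have P : 0 <= dot1 (sub1 zi xi) (sub1 zi xi) by rewrite -norm1_sq; have := norm1_pos (sub1 zi xi); nra.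
have -> : / 2 * (ww i - L i / INR N) * dot1 (sub1 zi xi) (sub1 zi xi) =
   / 2 * ww i * dot1 (sub1 zi xi) (sub1 zi xi) - / INR N * (L i / 2 * dot1 (sub1 zi xi) (sub1 zi xi)).
  field. have := INRN_pos; lra.
nra.
Qed.

Lemma Qb_upper i xi zi :
  Qb i xi zi <= / INR N * f i zi + Acoef * dot1 (sub1 zi xi) (sub1 zi xi).
Proof.
have D := descent_lemma (f i) (gf i) (L i) xi zi (Hgrad i) (HLip i) (HL i).
rewrite norm1_sq in D. move: D => /Rabs_le_bt D.
rewrite /Qb. have Hn : 0 < / INR N by apply Rinv_0_lt_compat, INRN_pos.
have P : 0 <= dot1 (sub1 zi xi) (sub1 zi xi) by rewrite -norm1_sq; have := norm1_pos (sub1 zi xi); nra.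
have A := Acoef_ge i.
have : / 2 * (ww i + L i / INR N) * dot1 (sub1 zi xi) (sub1 zi xi) <= Acoef * dot1 (sub1 zi xi) (sub1 zi xi).
  by apply Rmult_le_compat_r.
have -> : / 2 * (ww i + L i / INR N) * dot1 (sub1 zi xi) (sub1 zi xi) =
   / 2 * ww i * dot1 (sub1 zi xi) (sub1 zi xi) + / INR N * (L i / 2 * dot1 (sub1 zi xi) (sub1 zi xi)).
  field. have := INRN_pos; lra.
nra.
Qed.

Lemma Fsum_sum z : Fsum f z = sumR (fun i => / INR N * f i (z i)).
Proof. by rewrite /Fsum sumR_scal. Qed.

Lemma qq_lower x z : Phi z + amin * bdot (bsub z x) (bsub z x) <= qq x z.
Proof.
rewrite /qq /Phi Fsum_sum /bdot -sumR_scal.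
have : sumR (fun i => / INR N * f i (z i)) + sumR (fun i => amin * dot1 (bsub z x i) (bsub z x i))
   <= sumR (fun i => Qb i (x i) (z i)).
  rewrite -sumR_add. apply: sumR_le => i. apply: Rle_trans (Qb_lower i (x i) (z i)).
  change (bsub z x i) with (sub1 (z i) (x i)). apply Rplus_le_compat_l.
  apply Rmult_le_compat_r; [rewrite -norm1_sq; have := norm1_pos (sub1 (z i) (x i)); nra| exact: amin_le].
lra.
Qed.

Lemma qq_upper x z : qq x z <= Phi z + Acoef * bdot (bsub z x) (bsub z x).
Proof.
rewrite /qq /Phi Fsum_sum /bdot -sumR_scal.
have : sumR (fun i => Qb i (x i) (z i)) <=
  sumR (fun i => / INR N * f i (z i)) + sumR (fun i => Acoef * dot1 (bsub z x i) (bsub z x i)).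
  rewrite -sumR_add. apply: sumR_le => i. exact: Qb_upper.
lra.
Qed.

Definition vsub (x z : bvec N nb) : bvec N nb :=
  fun i j => ww i * (x i j - z i j) - gradF gf x i j + gradF gf z i j.

Lemma in_T_prox x z : in_T domG G gf gamma x z -> in_prox domG G ww (uu x) z.
Proof. by []. Qed.

Lemma subgrad x z : in_T domG G gf gamma x z -> regular_subdiff domG Phi z (vsub x z).
Proof.
move=> HT. split; first exact: (proj1 HT).
move=> eps Heps. have HLm := Lm_pos.
exists (2 * eps / Lm). split; first by apply Rdiv_lt_0_compat; lra.
move=> y Hy Hyz.
have VI := prox_VI domG G ww ww_nneg HGconvex (uu x) z y (in_T_prox x z HT) Hy.
set v' : bvec N nb := fun i j => ww i * (x i j - z i j) - gradF gf x i j.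
have E1 : wdot ww (bsub (uu x) z) (bsub z y) = - bdot v' (bsub y z).
  rewrite /wdot /bdot. rewrite -(Rmult_1_l (sumR (fun i => dot1 (v' i) (bsub y z i)))).
  rewrite Ropp_mult_distr_l -sumR_scal. apply: sumR_ext => i.
  rewrite /dot1 -!sumR_scal. apply: sumR_ext => j. rewrite /bsub /uu /v'.
  have := ww_gamma i. move=> Hwg. 
  have -> : ww i * ((x i j - gamma i * gradF gf x i j - z i j) * (z i j - y i j)) =
     (ww i * (x i j - z i j) - (ww i * gamma i) * gradF gf x i j) * (z i j - y i j) by ring.
  rewrite Hwg. ring.
have E2 : bdot (vsub x z) (bsub y z) = bdot v' (bsub y z) + bdot (gradF gf z) (bsub y z).
  rewrite -bdot_add_l. rewrite /bdot. apply: sumR_ext => i. rewrite /dot1. apply: sumR_ext => j.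
  rewrite /vsub /v' /badd. ring.
have FE := Fsum_expand y z. move: FE => /Rabs_le_bt FE.
rewrite /Phi. rewrite E2. rewrite E1 in VI.
have Hb := bnorm_pos (bsub y z).
have : Lm / 2 * bdot (bsub y z) (bsub y z) <= eps * bnorm (bsub y z).
  rewrite -bnorm_sq.
  have : bnorm (bsub y z) * Lm <= 2 * eps.
    have := Rmult_le_compat_r Lm _ _ (Rlt_le _ _ HLm) (Rlt_le _ _ Hyz).
    rewrite /Rdiv Rmult_assoc Rinv_l; lra.
  nra.
lra.
Qed.

Definition CT := sqrt wM / sqrt wm * (1 + gM * Lm).

Lemma CT_pos : 0 < CT.
Proof.
rewrite /CT. have := sqrt_lt_R0 _ wM_pos. have := sqrt_lt_R0 _ wm_pos. have := gM_pos. have := Lm_pos.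
move=> *. apply Rmult_lt_0_compat; first by apply Rdiv_lt_0_compat.
nra.
Qed.

Lemma uu_lip x1 x2 : bnorm (bsub (uu x1) (uu x2)) <= (1 + gM * Lm) * bnorm (bsub x1 x2).
Proof.
set D := bsub (gradF gf x1) (gradF gf x2).
have -> : bsub (uu x1) (uu x2) = bsub (bsub x1 x2) (fun i j => gamma i * D i j).
  apply: bvec_ext => i j. rewrite /bsub /uu /D /bsub. ring.
apply: Rle_trans (bnorm_tri _ bzero _) _.
have -> : bnorm (bsub (bsub x1 x2) bzero) = bnorm (bsub x1 x2) by apply: bnorm_ext => i j; rewrite /bsub /bzero; ring.
have -> : bnorm (bsub bzero (fun i j => gamma i * D i j)) = bnorm (fun i j => gamma i * D i j).
  rewrite bnorm_opp. apply: bnorm_ext => i j; rewrite /bsub /bzero; ring.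
have : bnorm (fun i j => gamma i * D i j) <= gM * bnorm D.
  apply: bnorm_blockwise; first exact: Rlt_le gM_pos.
  move=> i. change (fun j => gamma i * D i j) with (scal1 (gamma i) (D i)).
  rewrite norm1_scal Rabs_pos_eq; last exact: Rlt_le (proj1 (Hgamma i)).
  apply Rmult_le_compat_r; [exact: norm1_pos | exact: gM_ge].
have := gradF_lip x1 x2. rewrite -/D. have := gM_pos. have := bnorm_pos D. have := bnorm_pos (bsub x1 x2).
nra.
Qed.

Lemma T_lip x1 x2 z1 z2 : in_T domG G gf gamma x1 z1 -> in_T domG G gf gamma x2 z2 ->
  bnorm (bsub z1 z2) <= CT * bnorm (bsub x1 x2).
Proof.
move=> H1 H2.
have P := prox_nonexp domG G ww ww_nneg HGconvex _ _ _ _ (in_T_prox _ _ H1) (in_T_prox _ _ H2).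
have A := wn_le ww wM (bsub (uu x1) (uu x2)) (Rlt_le _ _ wM_pos) wM_ge.
have B := wn_ge ww wm (bsub z1 z2) (Rlt_le _ _ wm_pos) wm_le.
have U := uu_lip x1 x2.
have Hm := sqrt_lt_R0 _ wm_pos. have HM := sqrt_lt_R0 _ wM_pos.
apply (Rmult_le_reg_l (sqrt wm)) => //.
have -> : sqrt wm * (CT * bnorm (bsub x1 x2)) = sqrt wM * ((1 + gM * Lm) * bnorm (bsub x1 x2)).
  rewrite /CT. field. lra.
apply: Rle_trans B _. apply: Rle_trans P _. apply: Rle_trans A _.
apply Rmult_le_compat_l; lra.
Qed.

Variable x z : nat -> bvec N nb.
Variable sel : nat -> 'I_N -> Prop.
Hypothesis Hz : forall k, in_T domG G gf gamma (x k) (z k).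
Hypothesis Hupd : forall k i j,
      (sel (S k) i -> x (S k) i j = z k i j) /\
      (~ sel (S k) i -> x (S k) i j = x k i j).
Variable T : nat.
Hypothesis HT1 : (1 <= T)%nat.
Hypothesis Hcyc : forall k i, exists t, (1 <= t <= T)%nat /\ sel (k + t)%nat i.
Hypothesis Hargmin : argmin_nonempty domG Phi.

Definition Psi k := qq (x k) (z k).
Definition dd k := bnorm (bsub (x (S k)) (x k)).
Definition rr k := bnorm (bsub (z k) (x k)).

Lemma dd_pos k : 0 <= dd k.
Proof. exact: bnorm_pos. Qed.
Lemma rr_pos k : 0 <= rr k.
Proof. exact: bnorm_pos. Qed.

Lemma Psi_step k : Psi (S k) <= Psi k - amin * (dd k * dd k).
Proof.
rewrite /Psi /dd bnorm_sq.
apply: Rle_trans (qq_min _ _ _ (Hz (S k)) (proj1 (Hz k))) _.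
rewrite /qq /bdot -sumR_scal.
suff : sumR (fun i => Qb i (x k.+1 i) (z k i)) <=
  sumR (fun i => Qb i (x k i) (z k i)) - sumR (fun i => amin * dot1 (bsub (x k.+1) (x k) i) (bsub (x k.+1) (x k) i)) by lra.
rewrite -sumR_sub. apply: sumR_le => i.
destruct (Classical_Prop.classic (sel (S k) i)) as [Hs|Hs].
- have E : x (S k) i = z k i by apply functional_extensionality => j; exact: (proj1 (Hupd k i j) Hs).
  change (bsub (x k.+1) (x k) i) with (sub1 (x k.+1 i) (x k i)). rewrite E Qb_self.
  have := Qb_lower i (x k i) (z k i). have := amin_le i.
  have := norm1_sq (sub1 (z k i) (x k i)). have := norm1_pos (sub1 (z k i) (x k i)). nra.
- have E : x (S k) i = x k i by apply functional_extensionality => j; exact: (proj2 (Hupd k i j) Hs).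
  change (bsub (x k.+1) (x k) i) with (sub1 (x k.+1 i) (x k i)). rewrite E.
  have -> : sub1 (x k i) (x k i) = scal1 0 (x k i) by apply functional_extensionality => j; rewrite /sub1 /scal1; ring.
  rewrite dot1_scal_l. lra.
Qed.

Lemma Psi_lower k : Phi (z k) + amin * (rr k * rr k) <= Psi k.
Proof. rewrite /rr bnorm_sq. exact: qq_lower. Qed.
Lemma Psi_upper k : Psi k <= Phi (z k) + Acoef * (rr k * rr k).
Proof. rewrite /rr bnorm_sq. exact: qq_upper. Qed.

Lemma Phi_lb : exists m, forall y, domG y -> m <= Phi y.
Proof. have [xm [_ H]] := Hargmin. by exists (Phi xm). Qed.

Lemma Psi_decr : Un_decreasing Psi.
Proof. move=> k. have := Psi_step k. have := dd_pos k. have := amin_pos. nra. Qed.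

Lemma Psi_lb : has_lb Psi.
Proof.
have [m Hm] := Phi_lb. exists (- m) => r [k ->]. rewrite /opp_seq.
have := Psi_lower k. have := Hm (z k) (proj1 (Hz k)). have := rr_pos k. have := amin_pos. nra.
Qed.

Definition Psistar := proj1_sig (decreasing_cv Psi Psi_decr Psi_lb).
Lemma Psi_cv : Un_cv Psi Psistar.
Proof. exact: proj2_sig (decreasing_cv Psi Psi_decr Psi_lb). Qed.
Lemma Psi_ge k : Psistar <= Psi k.
Proof. exact: decreasing_ineq Psi_decr Psi_cv k. Qed.
Lemma Psi_mono m n : (m <= n)%nat -> Psi n <= Psi m.
Proof. move=> H. apply: decreasing_prop Psi_decr _. exact/leP. Qed.

Definition ee k := Psi k - Psistar.
Lemma ee_pos k : 0 <= ee k.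
Proof. have := Psi_ge k. rewrite /ee; lra. Qed.

Definition wsum (g : nat -> R) (k m : nat) := sumR (fun t : 'I_m => g (k + t)%nat).

Lemma wsum_0 g k : wsum g k 0 = 0.
Proof. by rewrite /wsum /sumR big_ord0. Qed.
Lemma wsum_S g k m : wsum g k (S m) = wsum g k m + g (k + m)%nat.
Proof. by rewrite /wsum /sumR big_ord_recr. Qed.
Lemma wsum_nonneg g k m : (forall s, 0 <= g s) -> 0 <= wsum g k m.
Proof. move=> H. apply: sumR_nonneg => t; exact: H. Qed.
Lemma wsum_mono g k m m' : (forall s, 0 <= g s) -> (m <= m')%nat -> wsum g k m <= wsum g k m'.
Proof.
move=> H Hm. elim: m' Hm => [|m' IH] Hm.
- have -> : m = 0%nat by lia. lra.
- case: (ltngtP m (S m')) => Hc.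
  + rewrite wsum_S. have := H (k + m')%nat. have := IH ltac:(lia). lra.
  + lia.
  + rewrite Hc; lra.
Qed.
Lemma wsum_le g h k m : (forall s, g s <= h s) -> wsum g k m <= wsum h k m.
Proof. move=> H. apply: sumR_le => t; exact: H. Qed.

Lemma Psi_window k m : Psi (k + m)%nat <= Psi k - amin * wsum (fun s => dd s * dd s) k m.
Proof.
elim: m => [|m IH].
- rewrite wsum_0 addn0. lra.
- rewrite wsum_S addnS. have := Psi_step (k + m)%nat. lra.
Qed.

Lemma x_window k m : bnorm (bsub (x (k + m)%nat) (x k)) <= wsum dd k m.
Proof.
elim: m => [|m IH].
- rewrite wsum_0 addn0 bnorm_self. lra.
- rewrite wsum_S addnS. apply: Rle_trans (bnorm_tri _ (x (k + m)%nat) _) _.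
  rewrite /dd in IH *. lra.
Qed.

Lemma sumR_CS {n} (a : 'I_n -> R) : sumR a * sumR a <= INR n * sumR (fun i => a i * a i).
Proof.
have H := dot1_CS (a : blk n) (fun _ => 1).
have E1 : dot1 (a : blk n) (fun _ => 1) = sumR a by rewrite /dot1; apply: sumR_ext => i; ring.
have E2 : norm1 (fun _ : 'I_n => 1) * norm1 (fun _ : 'I_n => 1) = INR n.
  rewrite norm1_sq /dot1 /sumR big_const_ord. clear H E1. elim: n {a} => [|n IH]; first by simpl; lra.
  rewrite S_INR /= -IH. lra.
rewrite E1 in H.
set na := norm1 (a : blk n) in H. set n1 := norm1 (fun _ : 'I_n => 1) in H E2.
have Hna : 0 <= na := norm1_pos _. have Hn1 : 0 <= n1 := norm1_pos _.
have H2 : Rabs (sumR a) * Rabs (sumR a) <= (na * n1) * (na * n1).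
  apply Rmult_le_compat; try exact: Rabs_pos; lra.
have E3 : sumR a * sumR a = Rabs (sumR a) * Rabs (sumR a).
  rewrite -Rabs_mult Rabs_pos_eq //; nra.
have E4 : na * na = sumR (fun i => a i * a i) by rewrite /na norm1_sq.
rewrite E3. rewrite -E2 -E4. nra.
Qed.

Definition Ccyc := INR N * (CT + 1).
Lemma Ccyc_pos : 0 < Ccyc.
Proof. rewrite /Ccyc. have := INRN_pos. have := CT_pos. nra. Qed.

Lemma rr_window k : rr k <= Ccyc * wsum dd k T.
Proof.
rewrite /rr. apply: Rle_trans (bnorm_le_sum _) _. rewrite /Ccyc Rmult_assoc.
apply: sumR_lt_all.
move=> i. have [t [Ht Hsel]] := Hcyc k i.
have Et : (k + t = S (k + (t - 1)))%nat by lia.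
rewrite Et in Hsel.
have E : x (S (k + (t - 1))) i = z (k + (t - 1))%nat i.
  apply functional_extensionality => j; exact: (proj1 (Hupd _ i j) Hsel).
set m := (t - 1)%nat in E Et.
have Dec : bsub (z k) (x k) i = add1 (add1 (sub1 (z k i) (z (k + m)%nat i))
     (sub1 (x (S (k + m)) i) (x (k + m)%nat i))) (sub1 (x (k + m)%nat i) (x k i)).
  apply functional_extensionality => j. rewrite /add1 /sub1 /bsub E. ring.
rewrite Dec. apply: Rle_trans (norm1_add _ _) _. apply: Rle_trans (Rplus_le_compat_r _ _ _ (norm1_add _ _)) _.
have A1 : norm1 (sub1 (z k i) (z (k + m)%nat i)) <= CT * wsum dd k m.
  apply: Rle_trans (norm1_le_bnorm (bsub (z k) (z (k + m)%nat)) i) _.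
  apply: Rle_trans (T_lip _ _ _ _ (Hz k) (Hz (k + m)%nat)) _.
  rewrite bnorm_opp. apply Rmult_le_compat_l; [exact: Rlt_le CT_pos | exact: x_window].
have A2 : norm1 (sub1 (x (S (k + m)) i) (x (k + m)%nat i)) <= dd (k + m)%nat.
  exact: (norm1_le_bnorm (bsub (x (S (k + m))) (x (k + m)%nat)) i).
have A3 : norm1 (sub1 (x (k + m)%nat i) (x k i)) <= wsum dd k m.
  apply: Rle_trans (norm1_le_bnorm (bsub (x (k + m)%nat) (x k)) i) _. exact: x_window.
have W1 : wsum dd k m + dd (k + m)%nat <= wsum dd k T.
  rewrite -wsum_S. apply: wsum_mono; [exact: dd_pos | lia].
have W0 : 0 <= wsum dd k m by apply: wsum_nonneg; exact: dd_pos.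
have := CT_pos. have := dd_pos (k + m)%nat. nra.
Qed.

Lemma INRT_pos : 0 < INR T.
Proof. apply lt_0_INR. apply/ltP. exact: HT1. Qed.

Lemma ee_window k : amin / INR T * (wsum dd k T * wsum dd k T) <= ee k - ee (k + T)%nat.
Proof.
have W := Psi_window k T. have C := sumR_CS (fun t : 'I_T => dd (k + t)%nat).
change (sumR (fun t : 'I_T => dd (k + t)%nat)) with (wsum dd k T) in C.
change (sumR (fun i : 'I_T => dd (k + i)%nat * dd (k + i)%nat)) with (wsum (fun s => dd s * dd s) k T) in C.
have HT := INRT_pos. have Ha := amin_pos. rewrite /ee.
have : amin / INR T * (wsum dd k T * wsum dd k T) <= amin * wsum (fun s => dd s * dd s) k T.
  apply (Rmult_le_reg_l (INR T)) => //.
  have -> : INR T * (amin / INR T * (wsum dd k T * wsum dd k T)) = amin * (wsum dd k T * wsum dd k T) by field; lra.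
  nra.
lra.
Qed.

Definition Kr := Ccyc * Ccyc * INR T / amin.
Lemma Kr_pos : 0 < Kr.
Proof. rewrite /Kr. have H1 := Ccyc_pos. have H2 := INRT_pos. have H3 := amin_pos. apply Rdiv_lt_0_compat; last exact: H3. apply Rmult_lt_0_compat; last exact: H2. nra. Qed.

Lemma rr_sq k : rr k * rr k <= Kr * (ee k - ee (k + T)%nat).
Proof.
have R1 := rr_window k. have W := ee_window k. have P := rr_pos k.
have W0 : 0 <= wsum dd k T by apply: wsum_nonneg; exact: dd_pos.
have Hc := Ccyc_pos. have HT := INRT_pos. have Ha := amin_pos.
have : rr k * rr k <= Ccyc * Ccyc * (wsum dd k T * wsum dd k T) by nra.
have -> : Kr * (ee k - ee (k + T)%nat) = Ccyc * Ccyc * (INR T / amin * (ee k - ee (k + T)%nat)).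
  rewrite /Kr; field; lra.
have : wsum dd k T * wsum dd k T <= INR T / amin * (ee k - ee (k + T)%nat).
  apply (Rmult_le_reg_l (amin / INR T)); first by apply Rdiv_lt_0_compat.
  have -> : amin / INR T * (INR T / amin * (ee k - ee (k + T)%nat)) = ee k - ee (k + T)%nat by field; lra.
  lra.
move=> H1 H2. apply: Rle_trans H2 _. apply Rmult_le_compat_l; first nra. exact: H1.
Qed.

Lemma ee_mono m n : (m <= n)%nat -> ee n <= ee m.
Proof. move=> H. have := Psi_mono m n H. rewrite /ee; lra. Qed.

Lemma ee_small del : 0 < del -> exists K, forall k, (K <= k)%nat -> ee k < del.
Proof.
move=> Hd. have [K HK] := Psi_cv del Hd. exists K => k Hk.
have := HK k ltac:(apply/leP; exact: Hk). rewrite /R_dist /ee. move=> H.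
have := Rle_abs (Psi k - Psistar). lra.
Qed.

Lemma rr_small del : 0 < del -> exists K, forall k, (K <= k)%nat -> rr k < del.
Proof.
move=> Hd. have HK := Kr_pos.
have [K HK'] := ee_small (del * del / Kr) ltac:(apply Rdiv_lt_0_compat; nra).
exists K => k Hk. have := rr_sq k. have := HK' k Hk. have := ee_pos (k + T)%nat. have := rr_pos k.
move=> P1 P2 P3 P4.
have : rr k * rr k < del * del.
  have : Kr * (ee k - ee (k + T)%nat) < Kr * (del * del / Kr) by apply Rmult_lt_compat_l => //; lra.
  have -> : Kr * (del * del / Kr) = del * del by field; lra.
  lra.
nra.
Qed.

Lemma le_eps A B : (forall eps, 0 < eps -> A <= B + eps) -> A <= B.
Proof. move=> H. apply Rnot_lt_le => Hc. have := H ((A - B) / 2) ltac:(lra). lra. Qed.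

Lemma bnorm_sub_le (p q : bvec N nb) : bnorm (bsub p q) <= bnorm p + bnorm q.
Proof. rewrite bsub_add. apply: Rle_trans (bnorm_add _ _) _. rewrite bnorm_scal Rabs_Ropp Rabs_R1; lra. Qed.

Lemma F_cont (b : bvec N nb) : forall eps, 0 < eps -> exists del, 0 < del /\
  forall a, bnorm (bsub a b) < del -> Rabs (Fsum f a - Fsum f b) < eps.
Proof.
move=> eps He. set g := bnorm (gradF gf b). have Hg : 0 <= g := bnorm_pos _.
have HLm := Lm_pos.
exists (Rmin 1 (eps / (g + Lm + 1))). split.
  apply Rmin_pos; [lra| apply Rdiv_lt_0_compat; lra].
move=> a Ha. have Hd1 := Rlt_le_trans _ _ _ Ha (Rmin_l _ _). have Hd2 := Rlt_le_trans _ _ _ Ha (Rmin_r _ _).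
set d := bnorm (bsub a b) in Hd1 Hd2. have Hd : 0 <= d := bnorm_pos (bsub a b).
have FE := Fsum_expand a b. have CS := bdot_CS (gradF gf b) (bsub a b).
rewrite -bnorm_sq in FE.
have : Rabs (Fsum f a - Fsum f b) <= g * d + Lm / 2 * (d * d).
  have := Rabs_triang (Fsum f a - Fsum f b - bdot (gradF gf b) (bsub a b)) (bdot (gradF gf b) (bsub a b)).
  have -> : Fsum f a - Fsum f b - bdot (gradF gf b) (bsub a b) + bdot (gradF gf b) (bsub a b) = Fsum f a - Fsum f b by ring.
  rewrite -/d -/g in FE CS. lra.
have : d * (g + Lm + 1) < eps.
  have := Rmult_lt_compat_r (g + Lm + 1) _ _ ltac:(lra) Hd2. rewrite /Rdiv Rmult_assoc Rinv_l; lra.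
move=> HH1 HH2. have Hdd : d * d <= d by have := Rmult_le_compat_l d _ _ Hd (Rlt_le _ _ Hd1); lra. have := Rmult_le_compat_l Lm _ _ (Rlt_le _ _ HLm) Hdd. have := Rmult_le_pos Lm d (Rlt_le _ _ HLm) Hd. intros; lra.
Qed.

Lemma wnorm2_cont (b : bvec N nb) : forall eps, 0 < eps -> exists del, 0 < del /\
  forall a, bnorm (bsub a b) < del -> Rabs (wnorm2 ww a - wnorm2 ww b) < eps.
Proof.
move=> eps He. set s := sqrt wM. have Hs : 0 < s := sqrt_lt_R0 _ wM_pos.
set nb0 := wn ww b. have Hn : 0 <= nb0 := wn_pos _ _.
exists (Rmin 1 (eps / (s * (2 * nb0 + s) + 1))). split.
  apply Rmin_pos; [lra| apply Rdiv_lt_0_compat; nra].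
move=> a Ha. have Hd1 := Rlt_le_trans _ _ _ Ha (Rmin_l _ _). have Hd2 := Rlt_le_trans _ _ _ Ha (Rmin_r _ _).
set d := bnorm (bsub a b) in Hd1 Hd2. have Hd : 0 <= d := bnorm_pos (bsub a b).
have W := wn_le ww wM (bsub a b) (Rlt_le _ _ wM_pos) wM_ge. rewrite -/s -/d in W.
have T1 : wn ww a <= wn ww (bsub a b) + nb0.
  have := wn_tri ww a b bzero ww_nneg.
  have -> : wn ww (bsub a bzero) = wn ww a by rewrite /wn /wnorm2; congr sqrt; apply: sumR_ext => i; congr (_ * _); rewrite /dot1; apply: sumR_ext => j; rewrite /bsub /bzero; ring.
  have -> : wn ww (bsub b bzero) = nb0 by rewrite /nb0 /wn /wnorm2; congr sqrt; apply: sumR_ext => i; congr (_ * _); rewrite /dot1; apply: sumR_ext => j; rewrite /bsub /bzero; ring.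
  lra.
have T2 : nb0 <= wn ww (bsub b a) + wn ww a.
  have := wn_tri ww b a bzero ww_nneg.
  have -> : wn ww (bsub a bzero) = wn ww a by rewrite /wn /wnorm2; congr sqrt; apply: sumR_ext => i; congr (_ * _); rewrite /dot1; apply: sumR_ext => j; rewrite /bsub /bzero; ring.
  have -> : wn ww (bsub b bzero) = nb0 by rewrite /nb0 /wn /wnorm2; congr sqrt; apply: sumR_ext => i; congr (_ * _); rewrite /dot1; apply: sumR_ext => j; rewrite /bsub /bzero; ring.
  lra.
rewrite (wn_opp ww b a ww_nneg) in T2.
have Ha0 := wn_pos ww a.
rewrite -(wn_sq ww a ww_nneg) -(wn_sq ww b ww_nneg) -/nb0.
have E : wn ww a * wn ww a - nb0 * nb0 = (wn ww a - nb0) * (wn ww a + nb0) by ring.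
rewrite E Rabs_mult.
have A1 : Rabs (wn ww a - nb0) <= s * d by apply Rabs_le; lra.
have A2 : Rabs (wn ww a + nb0) <= 2 * nb0 + s * d by rewrite Rabs_pos_eq; lra.
have : Rabs (wn ww a - nb0) * Rabs (wn ww a + nb0) <= (s * d) * (2 * nb0 + s * d).
  apply Rmult_le_compat; try exact: Rabs_pos; lra.
have : d * (s * (2 * nb0 + s) + 1) < eps.
  have := Rmult_lt_compat_r (s * (2 * nb0 + s) + 1) _ _ ltac:(nra) Hd2. rewrite /Rdiv Rmult_assoc Rinv_l; nra.
move=> HH1 HH2.
have P1 : 0 <= s * d by apply Rmult_le_pos; lra.
have P2 : s * d * (s * d) <= s * d * s by apply Rmult_le_compat_l; nra.
lra.
Qed.

Hypothesis Hcoer : coercive_ext domG Phi.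

Lemma z_bounded : exists B, forall k, bnorm (z k) <= B.
Proof.
have [r Hr] := Hcoer (Psi 0 + 1). exists r => k.
apply Rnot_lt_le => Hk. have := Hr (z k) (proj1 (Hz k)) (Rlt_le _ _ Hk).
have := Psi_lower k. have := Psi_mono 0 k (leq0n k). have := rr_pos k. have := amin_pos. nra.
Qed.

Hypothesis HGlsc : lsc_ext domG G.
Variable xbar : bvec N nb.
Hypothesis Hclus : forall eps, 0 < eps -> forall K, exists k, (K <= k)%nat /\ bnorm (bsub (z k) xbar) < eps.

Lemma cluster_x eps : 0 < eps -> forall K, exists k, (K <= k)%nat /\
  bnorm (bsub (z k) xbar) < eps /\ bnorm (bsub (x k) xbar) < eps /\ rr k < eps.
Proof.
move=> He K. have [K1 HK1] := rr_small (eps / 2) ltac:(lra).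
have [k [Hk Hzk]] := Hclus (eps / 2) ltac:(lra) (maxn K K1).
exists k. split; first by lia.
have Hr := HK1 k ltac:(lia).
split; first lra. split; last lra.
apply: Rle_lt_trans (bnorm_tri _ (z k) _) _. rewrite bnorm_opp. rewrite /rr in Hr. lra.
Qed.

Lemma xbar_dom : domG xbar.
Proof.
apply Classical_Prop.NNPP => Hn.
set M := Psi 0 - Fsum f xbar + 1.
have [del [Hd HG]] := proj2 (HGlsc xbar) Hn M.
have [dF [HdF HF]] := F_cont xbar 1 Rlt_0_1.
have [k [_ [Hzk _]]] := cluster_x (Rmin del dF) (Rmin_pos _ _ Hd HdF) 0.
have H1 := HG (z k) (proj1 (Hz k)) (Rlt_le_trans _ _ _ Hzk (Rmin_l _ _)).
have H2 := HF (z k) (Rlt_le_trans _ _ _ Hzk (Rmin_r _ _)).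
have := Psi_lower k. have := Psi_mono 0 k (leq0n k). have := rr_pos k. have := amin_pos.
have := Rle_abs (Fsum f (z k) - Fsum f xbar). have := Rle_abs (- (Fsum f (z k) - Fsum f xbar)). rewrite Rabs_Ropp.
rewrite /Phi /M in H1 *. nra.
Qed.

Lemma bsub_diff_le (a b c d : bvec N nb) :
  bnorm (bsub (bsub a b) (bsub c d)) <= bnorm (bsub a c) + bnorm (bsub b d).
Proof.
have -> : bsub (bsub a b) (bsub c d) = bsub (bsub a c) (bsub b d) by apply: bvec_ext => i j; rewrite /bsub; ring.
exact: bnorm_sub_le.
Qed.

Definition Cu := 1 + gM * Lm.
Lemma Cu_pos : 0 < Cu.
Proof. rewrite /Cu. have := gM_pos. have := Lm_pos. nra. Qed.

Lemma xbar_fix : in_T domG G gf gamma xbar xbar.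
Proof.
split; first exact: xbar_dom.
move=> y Hy. change (fun i => / gamma i) with ww. change (fun i j => xbar i j - gamma i * gradF gf xbar i j) with (uu xbar).
set us := uu xbar.
apply: le_eps => eps He.
have [d1 [Hd1 H1]] := wnorm2_cont (bsub xbar us) (eps/4) ltac:(lra).
have [d2 [Hd2 H2]] := wnorm2_cont (bsub y us) (eps/4) ltac:(lra).
have [d3 [Hd3 H3]] := proj1 (HGlsc xbar) xbar_dom (eps/4) ltac:(lra).
set rho := Rmin (Rmin d1 d2) d3.
have Hrho : 0 < rho by apply Rmin_pos; [apply Rmin_pos|].
have HC := Cu_pos.
set D := rho / (2 * (1 + Cu)).
have HD : 0 < D by apply Rdiv_lt_0_compat; lra.
have HDr : D * (1 + Cu) < rho.
  rewrite /D. have -> : rho / (2 * (1 + Cu)) * (1 + Cu) = rho / 2 by field; lra. lra.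
have [k [_ [Hzk [Hxk _]]]] := cluster_x D HD 0.
have Hu : bnorm (bsub (uu (x k)) us) <= Cu * D.
  apply: Rle_trans (uu_lip _ _) _. rewrite -/Cu. apply Rmult_le_compat_l; lra.
have Hm := proj2 (Hz k) y Hy.
change (fun i => / gamma i) with ww in Hm.
change (fun i j => x k i j - gamma i * gradF gf (x k) i j) with (uu (x k)) in Hm.
have Hr1 : rho <= d1 by have := Rmin_l (Rmin d1 d2) d3; have := Rmin_l d1 d2; rewrite -/rho; lra.
have Hr2 : rho <= d2 by have := Rmin_l (Rmin d1 d2) d3; have := Rmin_r d1 d2; rewrite -/rho; lra.
have Hr3 : rho <= d3 by have := Rmin_r (Rmin d1 d2) d3; rewrite -/rho; lra.
have A1 := H1 (bsub (z k) (uu (x k))).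
have B1 : bnorm (bsub (bsub (z k) (uu (x k))) (bsub xbar us)) < d1.
  apply: Rle_lt_trans (bsub_diff_le _ _ _ _) _. nra.
have A2 := H2 (bsub y (uu (x k))).
have B2 : bnorm (bsub (bsub y (uu (x k))) (bsub y us)) < d2.
  apply: Rle_lt_trans (bsub_diff_le _ _ _ _) _. rewrite bnorm_self. nra.
have A3 := H3 (z k) (proj1 (Hz k)) ltac:(nra).
move: (A1 B1) (A2 B2) => /Rabs_def2 [C1 C1'] /Rabs_def2 [C2 C2'].
lra.
Qed.

Lemma Phi_xbar_le : Phi xbar <= Psistar.
Proof.
apply: le_eps => eps He.
have He3 : 0 < eps / 3 by lra.
have [d3 [Hd3 H3]] := proj1 (HGlsc xbar) xbar_dom (eps / 3) He3.
have [dF [HdF HF]] := F_cont xbar (eps / 3) He3.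
have [K HK] := ee_small (eps / 3) He3.
have [k [Hk [Hzk _]]] := cluster_x (Rmin d3 dF) (Rmin_pos _ _ Hd3 HdF) K.
have A3 := H3 (z k) (proj1 (Hz k)) (Rlt_le_trans _ _ _ Hzk (Rmin_l _ _)).
have AF := HF (z k) (Rlt_le_trans _ _ _ Hzk (Rmin_r _ _)).
have B1 := HK k Hk. have B2 := Psi_lower k.
have B3 : 0 <= amin * (rr k * rr k) by apply Rmult_le_pos; [exact: Rlt_le amin_pos| have := rr_pos k; nra].
have B4 := Rle_abs (- (Fsum f (z k) - Fsum f xbar)). rewrite Rabs_Ropp in B4.
rewrite /Phi /ee in B1 B2 *. lra.
Qed.

Lemma Psistar_le : Psistar <= Phi xbar.
Proof.
apply: le_eps => eps0 He0.
set eps := eps0 / 3. have He : 0 < eps by rewrite /eps; lra.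
have Heq : eps0 = 3 * eps by rewrite /eps; field.
set us := uu xbar.
have [d1 [Hd1 H1]] := wnorm2_cont (bsub xbar us) eps He.
have [dF [HdF HF]] := F_cont xbar eps He.
have HC := Cu_pos.
set rho := Rmin d1 dF.
have Hrho : 0 < rho by apply Rmin_pos.
have Hr1 : rho <= d1 by apply Rmin_l.
have Hr2 : rho <= dF by apply Rmin_r.
set D := Rmin (rho / (2 * (1 + Cu))) (sqrt (eps / (Acoef + 1))).
have HA : 0 < Acoef by rewrite /Acoef; have := wM_pos; have := Lm_pos; lra.
have Hs : 0 < sqrt (eps / (Acoef + 1)) by apply sqrt_lt_R0, Rdiv_lt_0_compat; lra.
have HD : 0 < D by apply Rmin_pos; [apply Rdiv_lt_0_compat; lra| exact: Hs].
have HDr : D * (1 + Cu) < rho.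
  have : D <= rho / (2 * (1 + Cu)) by apply Rmin_l.
  have -> : rho / (2 * (1 + Cu)) = rho / 2 / (1 + Cu) by field; lra.
  move=> H. have := Rmult_le_compat_r (1 + Cu) _ _ ltac:(lra) H.
  rewrite /Rdiv Rmult_assoc Rinv_l; lra.
have [k [_ [Hzk [Hxk Hrk]]]] := cluster_x D HD 0.
have Hu : bnorm (bsub (uu (x k)) us) <= Cu * D.
  apply: Rle_trans (uu_lip _ _) _. rewrite -/Cu. apply Rmult_le_compat_l; lra.
have Hm := proj2 (Hz k) xbar xbar_dom.
change (fun i => / gamma i) with ww in Hm.
change (fun i j => x k i j - gamma i * gradF gf (x k) i j) with (uu (x k)) in Hm.
have B1 : bnorm (bsub (bsub (z k) (uu (x k))) (bsub xbar us)) < d1.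
  apply: Rle_lt_trans (bsub_diff_le _ _ _ _) _. nra.
have B2 : bnorm (bsub (bsub xbar (uu (x k))) (bsub xbar us)) < d1.
  apply: Rle_lt_trans (bsub_diff_le _ _ _ _) _. rewrite bnorm_self. nra.
move: (H1 _ B1) (H1 _ B2) => /Rabs_def2 [C1 C1'] /Rabs_def2 [C2 C2'].
have AF := HF (z k) ltac:(nra).
have Hrr : Acoef * (rr k * rr k) <= eps.
  have Hr0 := rr_pos k.
  have : rr k <= sqrt (eps / (Acoef + 1)) by have := Rmin_r (rho / (2 * (1 + Cu))) (sqrt (eps / (Acoef + 1))); rewrite -/D; lra.
  move=> Hr. have : rr k * rr k <= eps / (Acoef + 1).
    rewrite -(sqrt_sqrt (eps / (Acoef + 1))); last by apply Rlt_le, Rdiv_lt_0_compat; lra.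
    apply Rmult_le_compat; lra.
  move=> H. have : Acoef * (eps / (Acoef + 1)) <= eps.
    have -> : Acoef * (eps / (Acoef + 1)) = eps * (Acoef / (Acoef + 1)) by field; lra.
    have : Acoef / (Acoef + 1) <= 1.
      apply (Rmult_le_reg_r (Acoef + 1)); first lra. rewrite /Rdiv Rmult_assoc Rinv_l; lra.
    nra.
  have := Rmult_le_compat_l Acoef _ _ (Rlt_le _ _ HA) H. lra.
have := Psi_upper k. have := Psi_ge k.
have := Rle_abs (Fsum f (z k) - Fsum f xbar).
rewrite /Phi. move: Hm. rewrite -/us. intros; lra.
Qed.

Lemma Psistar_eq : Psistar = Phi xbar.
Proof. have := Phi_xbar_le. have := Psistar_le. lra. Qed.

Lemma wsum_split g k a b : wsum g k (a + b)%nat = wsum g k a + wsum g (k + a)%nat b.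
Proof.
elim: b => [|b IH].
- rewrite addn0 wsum_0. lra.
- rewrite addnS !wsum_S IH addnA. lra.
Qed.

Lemma wsum_shift g k m : wsum g k (S m) = g k + wsum g (S k) m.
Proof.
rewrite /wsum /sumR big_ord_recl /=. rewrite addn0. congr (_ + _).
apply: eq_bigr => i _. by rewrite /bump /= add1n addSn addnS.
Qed.

Lemma wsum_le_in g h k m : (forall t, (t < m)%nat -> g (k + t)%nat <= h (k + t)%nat) -> wsum g k m <= wsum h k m.
Proof. move=> H. apply: sumR_le => t. apply: H. exact: ltn_ord. Qed.

Lemma telescope (p : nat -> R) k m :
  wsum (fun s => p s - p (s + T)%nat) k m = wsum p k T - wsum p (k + m)%nat T.
Proof.
elim: m => [|m IH].
- rewrite wsum_0 addn0. lra.
- rewrite wsum_S IH addnS.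
  have E1 := wsum_S p (k + m)%nat T. have E2 := wsum_shift p (k + m)%nat T.
  lra.
Qed.

Lemma telescope_le (p : nat -> R) k m : (forall s, 0 <= p s) -> (forall a b, (a <= b)%nat -> p b <= p a) ->
  wsum (fun s => p s - p (s + T)%nat) k m <= INR T * p k.
Proof.
move=> H0 Hm. rewrite telescope.
have : wsum p k T <= INR T * p k.
  rewrite /wsum. apply: sumR_lt_all => t. apply: Hm. exact: leq_addr.
have := wsum_nonneg p (k + m)%nat T H0. lra.
Qed.

Definition Cv := wM + Lm.
Lemma vsub_bound x0 z0 : bnorm (vsub x0 z0) <= Cv * bnorm (bsub z0 x0).
Proof.
have -> : vsub x0 z0 = badd (fun i j => ww i * (x0 i j - z0 i j)) (bscal (-1) (bsub (gradF gf x0) (gradF gf z0))).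
  apply: bvec_ext => i j. rewrite /vsub /badd /bscal /bsub. ring.
apply: Rle_trans (bnorm_add _ _) _. rewrite bnorm_scal Rabs_Ropp Rabs_R1 Rmult_1_l.
have A : bnorm (fun i j => ww i * (x0 i j - z0 i j)) <= wM * bnorm (bsub x0 z0).
  apply: bnorm_blockwise; first exact: Rlt_le wM_pos.
  move=> i. change (fun j => ww i * (x0 i j - z0 i j)) with (scal1 (ww i) (sub1 (x0 i) (z0 i))).
  rewrite norm1_scal Rabs_pos_eq; last exact: ww_nneg.
  apply Rmult_le_compat_r; [exact: norm1_pos| exact: wM_ge].
have B := gradF_lip x0 z0. rewrite bnorm_opp in A B. rewrite /Cv. lra.
Qed.

Lemma reg_lim y v : regular_subdiff domG Phi y v -> limiting_subdiff domG Phi y v.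
Proof.
move=> H. split; first exact: (proj1 H).
exists (fun _ => y), (fun _ => v). split; [|split; [|split]].
- move=> e He. exists 0%nat => k _. by rewrite bnorm_self.
- move=> e He. exists 0%nat => k _. rewrite /R_dist Rminus_diag Rabs_R0. lra.
- by move=> k.
- move=> e He. exists 0%nat => k _. by rewrite bnorm_self.
Qed.

Lemma xbar_subdiff : regular_subdiff domG Phi xbar bzero.
Proof.
have H := subgrad xbar xbar xbar_fix.
have -> : (bzero : bvec N nb) = vsub xbar xbar by apply: bvec_ext => i j; rewrite /vsub /bzero; ring.
exact: H.
Qed.

Variable theta : R.
Hypothesis Htheta : 0 < theta < 1.
Hypothesis HKL : KL_exp domG Phi theta.

Definition th' := Rmax theta (/ 2).
Definition alp := 1 - th'.
Lemma th'_range : / 2 <= th' < 1 /\ theta <= th'.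
Proof. rewrite /th'. have := Rmax_l theta (/2). have := Rmax_r theta (/2). move=> *.
split; [split; first lra| lra]. apply Rmax_lub_lt; lra. Qed.
Lemma alp_range : 0 < alp <= 1.
Proof. have := th'_range. rewrite /alp. lra. Qed.

Lemma KLx : exists eK etaK rhoK, 0 < eK /\ 0 < etaK /\ 0 < rhoK /\
    forall w, bnorm (bsub w xbar) < eK -> domG w ->
      Phi xbar < Phi w -> Phi w < Phi xbar + etaK ->
      forall v, limiting_subdiff domG Phi w v ->
        1 <= rhoK * (1 - theta) * Rpower (Phi w - Phi xbar) (- theta) * bnorm v.
Proof. have [_ H] := HKL xbar (ex_intro _ bzero (reg_lim _ _ xbar_subdiff)). exact: H. Qed.

Lemma rpow2 r : 0 < r -> r * r = Rpower r 2.
Proof. move=> Hr. have := Rpower_pow 2 r Hr. have -> : INR 2 = 2 by simpl; lra. move=> ->. ring. Qed.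

Section KLlocal.
Variables eK etaK rhoK : R.
Hypothesis HeK : 0 < eK.
Hypothesis HetaK : 0 < etaK.
Hypothesis HrhoK : 0 < rhoK.
Hypothesis HKLx : forall w, bnorm (bsub w xbar) < eK -> domG w ->
      Phi xbar < Phi w -> Phi w < Phi xbar + etaK ->
      forall v, limiting_subdiff domG Phi w v ->
        1 <= rhoK * (1 - theta) * Rpower (Phi w - Phi xbar) (- theta) * bnorm v.

Definition cK := rhoK * (1 - theta) * Cv.
Definition K0 := Acoef + Rpower cK (/ theta).
Definition K1 := Rpower K0 th'.

Lemma cK_pos : 0 < cK.
Proof. rewrite /cK /Cv. have := wM_pos. have := Lm_pos. move=> *. apply Rmult_lt_0_compat; [nra| lra]. Qed.
Lemma K0_pos : 0 < K0.
Proof. rewrite /K0 /Acoef. have := wM_pos. have := Lm_pos. have := Rpow_pos cK (/ theta). lra. Qed.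
Lemma K1_pos : 0 < K1.
Proof. exact: Rpow_pos. Qed.

Lemma KL_local s : bnorm (bsub (z s) xbar) < eK -> ee s < etaK -> rr s <= 1 -> 0 < ee s ->
  Rpower (ee s) th' <= K1 * rr s.
Proof.
move=> Hzs Hes Hr1 He.
have [[Ht1 Ht2] Ht3] := th'_range.
have Hee : ee s = Psi s - Phi xbar by rewrite /ee Psistar_eq.
set r := rr s. set d := Phi (z s) - Phi xbar.
have Hup : ee s <= d + Acoef * (r * r) by have := Psi_upper s; rewrite Hee /d /r; lra.
have HA : 0 < Acoef by rewrite /Acoef; have := wM_pos; have := Lm_pos; lra.
have Hr0 : 0 <= r := rr_pos s.
have Hd : d <= Rpower cK (/ theta) * Rpower r (/ theta) \/ d <= 0.
  destruct (Rle_lt_dec d 0) as [Hd0|Hd0]; first by right.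
  left.
  have Hlow := Psi_lower s. 
  have Hd1 : Phi (z s) < Phi xbar + etaK.
    have Hrs := rr_pos s.
    have P := Rmult_le_pos amin (rr s * rr s) (Rlt_le _ _ amin_pos) ltac:(nra).
    rewrite /ee Psistar_eq in Hes. lra.
  have HK := HKLx (z s) Hzs (proj1 (Hz s)) ltac:(rewrite /d in Hd0; lra) Hd1 (vsub (x s) (z s))
    (reg_lim _ _ (subgrad _ _ (Hz s))).
  rewrite -/d in HK.
  have Hv : bnorm (vsub (x s) (z s)) <= Cv * r := vsub_bound (x s) (z s).
  have Hp : 0 < Rpower d theta := Rpow_pos _ _.
  rewrite Rpower_Ropp in HK.
  have Hdt : Rpower d theta <= cK * r.
    have Hc : 0 < rhoK * (1 - theta) by apply Rmult_lt_0_compat; lra.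
    have : 1 <= rhoK * (1 - theta) * bnorm (vsub (x s) (z s)) / Rpower d theta.
      move: HK. rewrite /Rdiv. have -> : rhoK * (1 - theta) * / Rpower d theta * bnorm (vsub (x s) (z s)) = rhoK * (1 - theta) * bnorm (vsub (x s) (z s)) * / Rpower d theta by ring. done.
    move=> H1. have : Rpower d theta <= rhoK * (1 - theta) * bnorm (vsub (x s) (z s)).
      apply (Rmult_le_reg_r (/ Rpower d theta)); first by apply Rinv_0_lt_compat.
      rewrite Rinv_r; last lra. move: H1. rewrite /Rdiv. done.
    move=> H2. apply: Rle_trans H2 _. rewrite /cK. have := Rmult_le_compat_l (rhoK * (1 - theta)) _ _ (Rlt_le _ _ Hc) Hv. lra.
  have Hr : 0 < r.
    destruct (Req_dec r 0) as [E|E]; last lra. exfalso. rewrite E in Hdt. lra.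
  have Hit : 0 < / theta by apply Rinv_0_lt_compat; lra.
  have := Rle_Rpower_l (Rpower d theta) (cK * r) (/ theta) (Rlt_le _ _ Hit) (conj Hp Hdt).
  rewrite Rpow_inv' //; last lra. rewrite -Rpower_mult_distr //; exact: cK_pos.
have Hr : 0 < r.
  destruct (Req_dec r 0) as [E|E]; last lra. exfalso.
  case: Hd => Hd.
  - rewrite E in Hup.
    (* if r = 0 then d <= 0 by KL; handle via the other branch *)
    have : d <= 0.
      destruct (Rle_lt_dec d 0) as [Hd0|Hd0]; first done. exfalso.
      have Hd1 : Phi (z s) < Phi xbar + etaK.
        have Hlow := Psi_lower s. rewrite /ee Psistar_eq in Hes. have Er : rr s = 0 by rewrite -/r E.
        rewrite Er in Hlow. lra.
      have HK := HKLx (z s) Hzs (proj1 (Hz s)) ltac:(rewrite /d in Hd0; lra) Hd1 (vsub (x s) (z s))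
        (reg_lim _ _ (subgrad _ _ (Hz s))).
      have Hv : bnorm (vsub (x s) (z s)) <= Cv * r := vsub_bound (x s) (z s). rewrite E Rmult_0_r in Hv.
      have := bnorm_pos (vsub (x s) (z s)). move=> Hv0.
      have E0 : bnorm (vsub (x s) (z s)) = 0 by lra. rewrite E0 Rmult_0_r in HK. lra.
    move=> Hd2. lra.
  - rewrite E in Hup. lra.
have Hit' : 0 < / th' by apply Rinv_0_lt_compat; lra.
have Hr1' : 0 < r <= 1 by split; [exact: Hr| exact: Hr1].
have P1 : r * r <= Rpower r (/ th').
  rewrite rpow2 //. apply Rpow_dec_exp => //.
  rewrite -(Rinv_inv 2). apply Rinv_le_contravar; lra.
have P2 : Rpower r (/ theta) <= Rpower r (/ th').
  apply Rpow_dec_exp => //. apply Rinv_le_contravar; lra.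
have Hrp : 0 < Rpower r (/ th') := Rpow_pos _ _.
have HcK := Rpow_pos cK (/ theta).
have Hbound : ee s <= K0 * Rpower r (/ th').
  rewrite /K0. case: Hd => Hd.
  - have := Rmult_le_compat_l _ _ _ (Rlt_le _ _ HcK) P2. have := Rmult_le_compat_l _ _ _ (Rlt_le _ _ HA) P1. lra.
  - have := Rmult_le_compat_l _ _ _ (Rlt_le _ _ HA) P1. have : 0 <= Rpower cK (/ theta) * Rpower r (/ th') by nra. lra.
have := Rle_Rpower_l (ee s) (K0 * Rpower r (/ th')) th' ltac:(lra) (conj He Hbound).
rewrite -Rpower_mult_distr //; last exact: K0_pos.
rewrite Rpower_mult Rinv_l; last lra. rewrite Rpower_1 //.
Qed.

Definition Kf := K1 * Ccyc * INR T / (amin * alp).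
Lemma Kf_pos : 0 < Kf.
Proof.
rewrite /Kf. have := K1_pos. have := Ccyc_pos. have := INRT_pos. have := amin_pos. have := alp_range.
move=> [Ha _] H1 H2 H3 H4. apply Rdiv_lt_0_compat; last nra.
apply Rmult_lt_0_compat => //. nra.
Qed.

Lemma ee_le1 s : ee s <= / Kr -> rr s <= 1.
Proof.
move=> H. have := rr_sq s. have := ee_pos (s + T)%nat. have := Kr_pos. have := rr_pos s.
move=> P1 P2 P3 P4.
have : Kr * (ee s - ee (s + T)%nat) <= 1.
  have : Kr * ee s <= Kr * / Kr by apply Rmult_le_compat_l; lra.
  rewrite Rinv_r; last lra. nra.
nra.
Qed.

Lemma step_ineq s : bnorm (bsub (z s) xbar) < eK -> ee s < etaK -> ee s <= / Kr ->
  wsum dd s T <= Kf * (pw (ee s) alp - pw (ee (s + T)%nat) alp).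
Proof.
move=> Hzs Hes HeKr.
have [Ha Ha1] := alp_range. have [[Ht1 Ht2] _] := th'_range.
set S := wsum dd s T. have HS : 0 <= S by apply: wsum_nonneg; exact: dd_pos.
have Hmono : ee (s + T)%nat <= ee s by apply: ee_mono; exact: leq_addr.
have Hpw : 0 <= pw (ee s) alp - pw (ee (s + T)%nat) alp.
  have := pw_mono alp _ _ (Rlt_le _ _ Ha) Hmono. lra.
have HKf := Kf_pos.
destruct (Req_dec S 0) as [E|E]; first by rewrite E; nra.
have HSp : 0 < S by lra.
have W := ee_window s. rewrite -/S in W.
have HT := INRT_pos. have Hamin := amin_pos.
have HW : 0 < amin / INR T * (S * S) by apply Rmult_lt_0_compat; [apply Rdiv_lt_0_compat|nra].
have He0 : 0 < ee s by have := ee_pos (s + T)%nat; lra.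
have Hr1 := ee_le1 s HeKr.
have KL := KL_local s Hzs Hes Hr1 He0.
have Rw := rr_window s. rewrite -/S in Rw.
have HK1 := K1_pos. have HC := Ccyc_pos.
have KL2 : Rpower (ee s) th' <= K1 * Ccyc * S.
  apply: Rle_trans KL _. rewrite Rmult_assoc. apply Rmult_le_compat_l; lra.
have Cc := pw_concave alp (ee (s + T)%nat) (ee s) (conj Ha Ha1) (conj (ee_pos _) Hmono) He0.
have Ealp : alp - 1 = - th' by rewrite /alp; ring.
rewrite Ealp Rpower_Ropp in Cc.
have Hp : 0 < Rpower (ee s) th' := Rpow_pos _ _.
(* alp * (ee s - ee') / P >= alp * (amin/T S^2) / (K1 Ccyc S) = S / Kf *)
have X1 : alp * (amin / INR T * (S * S)) / (K1 * Ccyc * S) <= alp * / Rpower (ee s) th' * (ee s - ee (s + T)%nat).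
  have -> : alp * / Rpower (ee s) th' * (ee s - ee (s + T)%nat) = alp * (ee s - ee (s + T)%nat) / Rpower (ee s) th' by field; lra.
  rewrite /Rdiv. apply Rmult_le_compat.
  - apply Rmult_le_pos; lra.
  - apply Rlt_le, Rinv_0_lt_compat. apply Rmult_lt_0_compat; [apply Rmult_lt_0_compat|]; lra.
  - apply Rmult_le_compat_l; lra.
  - apply Rinv_le_contravar => //.
have X2 : alp * (amin / INR T * (S * S)) / (K1 * Ccyc * S) = S / Kf.
  rewrite /Kf. field. repeat split; lra.
rewrite X2 in X1.
have : S / Kf <= pw (ee s) alp - pw (ee (s + T)%nat) alp by lra.
move=> H. apply (Rmult_le_reg_r (/ Kf)); first by apply Rinv_0_lt_compat.
have -> : Kf * (pw (ee s) alp - pw (ee (s + T)%nat) alp) * / Kf = pw (ee s) alp - pw (ee (s + T)%nat) alp by field; lra.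
exact: H.
Qed.

Lemma trap : exists k0,
  (forall s, (k0 <= s)%nat -> bnorm (bsub (z s) xbar) < eK) /\
  (forall s, (k0 <= s)%nat -> ee s < etaK /\ ee s <= / Kr) /\
  (forall m, wsum dd k0 m <= Kf * INR T * pw (ee k0) alp).
Proof.
have [Ha Ha1] := alp_range.
set c := CT * Kf * INR T + 1.
have Hc : 0 < c.
  rewrite /c. have H1 := CT_pos. have H2 := Kf_pos. have H3 := INRT_pos.
  have := Rmult_lt_0_compat _ _ (Rmult_lt_0_compat _ _ H1 H2) H3. lra.
have [del [Hdel Hpw]] := pw_small alp Ha (eK / (2 * c)) ltac:(apply Rdiv_lt_0_compat; lra).
have HKr := Kr_pos.
set mu := Rmin (Rmin etaK (/ Kr)) del.
have Hmu : 0 < mu by apply Rmin_pos; [apply Rmin_pos; [lra| apply Rinv_0_lt_compat; lra]| lra].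
have [K HK] := ee_small mu Hmu.
have [k0 [Hk0 [Hz0 _]]] := cluster_x (eK / 2) ltac:(lra) K.
have Hmu1 : mu <= etaK by have := Rmin_l (Rmin etaK (/ Kr)) del; have := Rmin_l etaK (/ Kr); rewrite -/mu; lra.
have Hmu2 : mu <= / Kr by have := Rmin_l (Rmin etaK (/ Kr)) del; have := Rmin_r etaK (/ Kr); rewrite -/mu; lra.
have Hmu3 : mu <= del by apply Rmin_r.
have Hee : forall s, (k0 <= s)%nat -> ee s < etaK /\ ee s <= / Kr.
  move=> s Hs. have := HK s ltac:(lia). lra.
have Hpw0 : pw (ee k0) alp < eK / (2 * c) by apply: Hpw; have := HK k0 Hk0; lra.
have Hpos := pw_nneg (ee k0) alp.
have SB : forall m, (forall t, (t < m)%nat -> bnorm (bsub (z (k0 + t)%nat) xbar) < eK) ->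
   wsum dd k0 m <= Kf * INR T * pw (ee k0) alp.
  move=> m Hm.
  apply (Rle_trans _ (wsum (fun s => wsum dd s T) k0 m)).
    apply: wsum_le => s. have := wsum_mono dd s 1 T dd_pos HT1. rewrite wsum_S wsum_0 addn0. lra.
  apply (Rle_trans _ (wsum (fun s => Kf * (pw (ee s) alp - pw (ee (s + T)%nat) alp)) k0 m)).
    apply: wsum_le_in => t Ht. have [H1 H2] := Hee (k0 + t)%nat (leq_addr _ _).
    exact: step_ineq (Hm t Ht) H1 H2.
  rewrite /wsum sumR_scal Rmult_assoc. apply Rmult_le_compat_l; first exact: Rlt_le Kf_pos.
  apply: (telescope_le (fun s => pw (ee s) alp)).
  - move=> s0; exact: pw_nneg.
  - move=> a b Hab. apply: pw_mono; [lra| exact: ee_mono].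
have Tr : forall m, forall t, (t <= m)%nat -> bnorm (bsub (z (k0 + t)%nat) xbar) < eK.
  elim => [|m IH] t Ht.
  - have -> : t = 0%nat by lia. rewrite addn0. lra.
  - case: (ltngtP t m.+1) => Htm; [ |lia| ].
    + apply: IH. lia.
    + rewrite Htm.
      have B := SB m.+1 (fun t' Ht' => IH t' ltac:(lia)).
      apply: Rle_lt_trans (bnorm_tri _ (z k0) _) _.
      have L1 := T_lip _ _ _ _ (Hz (k0 + m.+1)%nat) (Hz k0).
      have L2 := x_window k0 m.+1.
      have HCT := CT_pos.
      have : CT * bnorm (bsub (x (k0 + m.+1)%nat) (x k0)) <= CT * (Kf * INR T * pw (ee k0) alp).
        apply Rmult_le_compat_l; lra.
      have : c * (eK / (2 * c)) = eK / 2 by field; lra.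
      have : CT * (Kf * INR T * pw (ee k0) alp) <= c * pw (ee k0) alp.
        rewrite /c. lra.
      have := Rmult_lt_compat_l c _ _ Hc Hpw0.
      intros. lra.
exists k0. split; [|split; first exact: Hee].
- move=> s Hs. have := Tr (s - k0)%nat (s - k0)%nat (leqnn _). by rewrite subnKC.
- move=> m. apply: SB. move=> t1 Ht1. exact: (Tr t1 t1 (leqnn t1)).
Qed.

Lemma x_conv : bconv x xbar.
Proof.
have [k0 [Hzt [Hee SB]]] := trap.
set P := fun m => wsum dd k0 m.
have Pg : Un_growing P by move=> m; rewrite /P wsum_S; have := dd_pos (k0 + m)%nat; lra.
have Pub : has_ub P by exists (Kf * INR T * pw (ee k0) alp) => r [m ->]; exact: SB.
have [l Hl] := growing_cv P Pg Pub.
have Pl := growing_ineq P l Pg Hl.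
move=> eps He.
have [M HM] := Hl (eps / 2) ltac:(lra).
exists (k0 + M)%nat => k Hk.
have [k' [Hk' [_ [Hxk' _]]]] := cluster_x (eps / 2) ltac:(lra) k.
apply: Rle_lt_trans (bnorm_tri _ (x k') _) _.
have E : (k' - k0 = (k - k0) + (k' - k))%nat by lia.
have W := wsum_split dd k0 (k - k0) (k' - k). rewrite -E in W.
have Ek : (k0 + (k - k0))%nat = k by lia. rewrite Ek in W.
have Xw := x_window k (k' - k). have Ek' : (k + (k' - k))%nat = k' by lia. rewrite Ek' in Xw.
rewrite bnorm_opp in Xw.
have H1 := Pl (k' - k0)%nat. have H2 := HM (k - k0)%nat ltac:(apply/leP; lia).
rewrite /R_dist in H2. have := Rle_abs (P (k - k0)%nat - l). have := Rle_abs (- (P (k - k0)%nat - l)).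
rewrite Rabs_Ropp. rewrite /P in H1 H2 *. intros. lra.
Qed.

Lemma z_conv : bconv z xbar.
Proof.
move=> eps He. have [K1' HK1] := x_conv (eps / 2) ltac:(lra). have [K2 HK2] := rr_small (eps / 2) ltac:(lra).
exists (maxn K1' K2) => k Hk. apply: Rle_lt_trans (bnorm_tri _ (x k) _) _.
have := HK1 k ltac:(lia). have := HK2 k ltac:(lia). rewrite /rr. lra.
Qed.

Lemma sqrt_pow a n : 0 <= a -> sqrt (a ^ n) = sqrt a ^ n.
Proof.
move=> Ha. elim: n => [|n IH] /=; first exact: sqrt_1.
rewrite sqrt_mult //; last exact: pow_le. by rewrite IH.
Qed.

Lemma pow_dec r m n : 0 <= r <= 1 -> (m <= n)%nat -> r ^ n <= r ^ m.
Proof.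
move=> Hr Hmn. have -> : n = (m + (n - m))%nat by lia. rewrite pow_add.
have := pow_le r m (proj1 Hr). have : r ^ (n - m) <= 1.
  have := pow_incr r 1 (n - m) Hr. rewrite pow1. done.
have := pow_le r (n - m) (proj1 Hr). nra.
Qed.

Lemma geom_wsum c r s m : 0 <= c -> 0 <= r < 1 ->
  wsum (fun t => c * r ^ t) s m <= c * r ^ s / (1 - r).
Proof.
move=> Hc Hr.
have E : forall m, wsum (fun t => c * r ^ t) s m = c * r ^ s * (1 - r ^ m) / (1 - r).
  elim => [|m' IH]; first by rewrite wsum_0 /=; field; lra.
  rewrite wsum_S IH pow_add /=. field. lra.
rewrite E. have := pow_le r m (proj1 Hr). have := pow_le r s (proj1 Hr).
move=> H1 H2. rewrite /Rdiv. apply Rmult_le_compat_r; first by apply Rlt_le, Rinv_0_lt_compat; lra.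
have := Rmult_le_pos c (r ^ s) Hc H1. nra.
Qed.

Lemma Rlinear_all : theta <= / 2 ->
  Rlinear_R (fun k => bnorm (bsub (z k) (x k))) 0 /\ Rlinear_b x xbar /\ Rlinear_b z xbar.
Proof.
move=> Hth.
have Eth : th' = / 2 by rewrite /th' Rmax_right.
have [k0 [Hzt [Hee SB]]] := trap.
set Q := K1 * Ccyc * (K1 * Ccyc) * INR T / amin.
have HK1 := K1_pos. have HC := Ccyc_pos. have HT := INRT_pos. have Ham := amin_pos.
have HKC := Rmult_lt_0_compat _ _ HK1 HC.
have HQ : 0 < Q by rewrite /Q; apply Rdiv_lt_0_compat => //; apply Rmult_lt_0_compat => //; apply Rmult_lt_0_compat.
set q := Rmax (1 - / Q) (/ 2).
have Hq : / 2 <= q < 1.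
  split; first exact: Rmax_r. apply Rmax_lub_lt; last lra. have := Rinv_0_lt_compat _ HQ. lra.
have Contr : forall s, (k0 <= s)%nat -> ee (s + T)%nat <= q * ee s.
  move=> s Hs. have [H1 H2] := Hee s Hs.
  have Hm : ee (s + T)%nat <= ee s by apply: ee_mono; exact: leq_addr.
  have He0 := ee_pos (s + T)%nat.
  destruct (Req_dec (ee s) 0) as [E|E]; first by rewrite E in Hm *; lra.
  have Hep : 0 < ee s by have := ee_pos s; lra.
  have KL := KL_local s (Hzt s Hs) H1 (ee_le1 s H2) Hep.
  rewrite Eth Rpower_sqrt // in KL.
  have Rw := rr_window s. have W := ee_window s.
  set S := wsum dd s T in Rw W.
  have HS : 0 <= S by apply: wsum_nonneg; exact: dd_pos.
  have Hrr := rr_pos s.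
  have A1 : sqrt (ee s) <= K1 * Ccyc * S.
    apply: Rle_trans KL _. rewrite Rmult_assoc. apply Rmult_le_compat_l; lra.
  have A2 : ee s <= (K1 * Ccyc * S) * (K1 * Ccyc * S).
    rewrite -{1}(sqrt_sqrt (ee s)); last lra. have := sqrt_pos (ee s). move=> P0.
    apply Rmult_le_compat; lra.
  have A3 : ee s <= Q * (ee s - ee (s + T)%nat).
    apply: Rle_trans A2 _. rewrite /Q.
    have -> : K1 * Ccyc * S * (K1 * Ccyc * S) = K1 * Ccyc * (K1 * Ccyc) * INR T / amin * (amin / INR T * (S * S)).
      field; lra.
    apply Rmult_le_compat_l; first by apply Rlt_le.
    exact: W.
  have : ee (s + T)%nat <= (1 - / Q) * ee s.
    have : ee s / Q <= ee s - ee (s + T)%nat.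
      apply (Rmult_le_reg_l Q) => //. have -> : Q * (ee s / Q) = ee s by field; lra. lra.
    move=> H. have -> : (1 - / Q) * ee s = ee s - ee s / Q by field; lra. lra.
  have := Rmax_l (1 - / Q) (/ 2). rewrite -/q. nra.
set r2 := Rpower q (/ INR T).
have Hr2 : 0 < r2 < 1.
  split; first exact: Rpow_pos. apply Rpow_lt1; first lra. apply Rinv_0_lt_compat; lra.
have Hr2T : r2 ^ T = q.
  rewrite -Rpower_pow; last lra. rewrite /r2 Rpower_mult Rinv_l; last lra. apply Rpower_1. lra.
set C0 := ee 0%nat / r2 ^ (k0 + T).
have Hpw0 : 0 < r2 ^ (k0 + T) by apply pow_lt; lra.
have Hee0 := ee_pos 0%nat.
have HC0 : 0 <= C0 by rewrite /C0; apply Rmult_le_pos; [lra| apply Rlt_le, Rinv_0_lt_compat; lra].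
have Geo : forall s, ee s <= C0 * r2 ^ s.
  elim/ltn_ind => s IH.
  case: (leqP (k0 + T) s) => Hs.
  - have E : s = ((s - T) + T)%nat by lia.
    rewrite E. have := Contr (s - T)%nat ltac:(lia). have := IH (s - T)%nat ltac:(lia).
    rewrite pow_add Hr2T. have := ee_pos (s - T)%nat. move=> P0 H1 H2.
    have : q * ee (s - T)%nat <= q * (C0 * r2 ^ (s - T)) by apply Rmult_le_compat_l; lra.
    lra.
  - have H1 : ee s <= ee 0%nat by apply: ee_mono.
    have H2 : r2 ^ (k0 + T) <= r2 ^ s by apply: pow_dec; [lra| lia].
    apply: Rle_trans H1 _. rewrite /C0.
    have -> : ee 0%nat / r2 ^ (k0 + T) * r2 ^ s = ee 0%nat * (r2 ^ s / r2 ^ (k0 + T)) by field; lra.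
    have : 1 <= r2 ^ s / r2 ^ (k0 + T).
      apply (Rmult_le_reg_r (r2 ^ (k0 + T))) => //. rewrite /Rdiv Rmult_assoc Rinv_l; lra.
    nra.
set rho := sqrt r2.
have Hrho : 0 < rho < 1.
  split; first by apply sqrt_lt_R0; lra.
  rewrite /rho -sqrt_1. apply sqrt_lt_1_alt; lra.
set c1 := sqrt C0 / sqrt amin.
have Hsa : 0 < sqrt amin := sqrt_lt_R0 _ Ham.
have Hc1 : 0 <= c1 by rewrite /c1; apply Rmult_le_pos; [exact: sqrt_pos| apply Rlt_le, Rinv_0_lt_compat; lra].
have Dd : forall s, dd s <= c1 * rho ^ s.
  move=> s. have St := Psi_step s. have Hd := dd_pos s.
  have : dd s * dd s <= ee s / amin.
    apply (Rmult_le_reg_l amin) => //. have -> : amin * (ee s / amin) = ee s by field; lra.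
    have := ee_pos (S s). rewrite /ee in St *. lra.
  move=> H. rewrite -(sqrt_square (dd s)) //.
  apply: Rle_trans (sqrt_le_1_alt _ _ H) _.
  have G1 : ee s / amin <= C0 * r2 ^ s / amin.
    rewrite /Rdiv. apply Rmult_le_compat_r; [apply Rlt_le, Rinv_0_lt_compat; lra| exact: Geo].
  apply: Rle_trans (sqrt_le_1_alt _ _ G1) _.
  have Hp : 0 <= r2 ^ s by apply pow_le; lra.
  rewrite sqrt_div_alt // sqrt_mult // sqrt_pow; last lra.
  right. rewrite /c1 /rho. field. lra.
have Rr : forall s, rr s <= Ccyc * INR T * c1 * rho ^ s.
  move=> s. have R0 := rr_window s.
  have W : wsum dd s T <= INR T * (c1 * rho ^ s).
    rewrite /wsum. apply: sumR_lt_all => t. apply: Rle_trans (Dd _) _.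
    apply Rmult_le_compat_l => //. apply: pow_dec; [lra| exact: leq_addr].
  have := Rmult_le_compat_l Ccyc _ _ (Rlt_le _ _ HC) W. lra.
have Xb : forall s, bnorm (bsub (x s) xbar) <= c1 * rho ^ s / (1 - rho).
  move=> s. apply: le_eps => eps He.
  have [K HK] := x_conv eps He.
  apply: Rle_trans (bnorm_tri _ (x (s + K)%nat) _) _.
  have := HK (s + K)%nat (leq_addl _ _).
  have Xw := x_window s K. rewrite bnorm_opp in Xw.
  have := wsum_le dd (fun t => c1 * rho ^ t) s K Dd.
  have := geom_wsum c1 rho s K Hc1 ltac:(lra). intros. lra.
have Hr1 : 0 < 1 - rho by lra.
split; [|split].
- exists (Ccyc * INR T * c1), rho. split => // k. rewrite Rminus_0_r Rabs_pos_eq; last exact: rr_pos.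
  exact: Rr.
- exists (c1 / (1 - rho)), rho. split => // k.
  have -> : c1 / (1 - rho) * rho ^ k = c1 * rho ^ k / (1 - rho) by field; lra. exact: Xb.
- exists (Ccyc * INR T * c1 + c1 / (1 - rho)), rho. split => // k.
  apply: Rle_trans (bnorm_tri _ (x k) _) _.
  have := Rr k. have := Xb k.
  have -> : c1 * rho ^ k / (1 - rho) = c1 / (1 - rho) * rho ^ k by field; lra.
  rewrite /rr. lra.
Qed.

End KLlocal.

Lemma final_given_xbar : bconv x xbar /\ bconv z xbar /\
    regular_subdiff domG Phi xbar bzero /\
    (theta <= / 2 ->
       Rlinear_R (fun k => bnorm (bsub (z k) (x k))) 0 /\
       Rlinear_b x xbar /\ Rlinear_b z xbar).
Proof.
have [eK [etaK [rhoK [H1 [H2 [H3 H4]]]]]] := KLx.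
split; first exact: (x_conv eK etaK rhoK H1 H2 H3 H4).
split; first exact: (z_conv eK etaK rhoK H1 H2 H3 H4).
split; first exact: xbar_subdiff.
exact: (Rlinear_all eK etaK rhoK H1 H2 H3 H4).
Qed.

End Problem.



Theorem theorem2p11
  (N : nat) (HN : (0 < N)%nat) (nb : 'I_N -> nat)
  (f : forall i : 'I_N, blk (nb i) -> R)
  (gf : forall i : 'I_N, blk (nb i) -> blk (nb i))
  (L : 'I_N -> R)
  (Hgrad : forall i, is_gradient (f i) (gf i))
  (HL : forall i, 0 <= L i)
  (HLip : forall i, lipschitz_grad (gf i) (L i))
  (domG : bvec N nb -> Prop) (G : bvec N nb -> R)
  (HGproper : proper_ext domG) (HGlsc : lsc_ext domG G)
  (HGconvex : convex_ext domG G)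
  (Hargmin : argmin_nonempty domG (fun x => Fsum f x + G x))
  (gamma : 'I_N -> R)
  (Hgamma : forall i, 0 < gamma i /\ gamma i * L i < INR N)
  (x z : nat -> bvec N nb) (sel : nat -> 'I_N -> Prop)
  (Hz : forall k, in_T domG G gf gamma (x k) (z k))
  (Hupd : forall k i j,
      (sel (S k) i -> x (S k) i j = z k i j) /\
      (~ sel (S k) i -> x (S k) i j = x k i j))
  (Hcyc : exists T, (1 <= T)%nat /\
      forall k i, exists t, (1 <= t <= T)%nat /\ sel (k + t)%nat i)
  (Hcoer : coercive_ext domG (fun x => Fsum f x + G x))
  (theta : R) (Htheta : 0 < theta < 1)
  (HKL : KL_exp domG (fun x => Fsum f x + G x) theta) :
  exists xstar : bvec N nb,
    bconv x xstar /\ bconv z xstar /\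
    regular_subdiff domG (fun x => Fsum f x + G x) xstar bzero /\
    (theta <= / 2 ->
       Rlinear_R (fun k => bnorm (bsub (z k) (x k))) 0 /\
       Rlinear_b x xstar /\ Rlinear_b z xstar).
Proof.
have [T [HT1 Hcyc']] := Hcyc.
have [B HB] := z_bounded N HN nb f gf L Hgrad HL HLip domG G gamma Hgamma x z sel Hz Hupd Hcoer.
have [xbar Hclus] := BW_bvec z B HB.
exists xbar.
exact: (final_given_xbar N HN nb f gf L Hgrad HL HLip domG G HGconvex gamma Hgamma x z sel Hz Hupd
  T HT1 Hcyc' Hargmin HGlsc xbar Hclus theta Htheta HKL).
Qed.
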